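(* Let $\mathbf f=(f_1,\dots,f_n)\in\mathcal{GEN}_n$ and let $R$ be a tournament on $[n+1]$ whose restriction to $[n]$ is $R[\mathbf f]$. For $f_{n+1}\in\mathcal G_0$ write $\mathbf f'=(f_1,\dots,f_n,f_{n+1})$. (a) The set $\{f_{n+1}\in\mathcal G_0:\mathbf f'\in\mathcal{GEN}_{n+1}\}$ is open and dense in $\mathcal G_0$. If $\mathbf f\in\mathcal{GEN}_n^+$, then $\{f_{n+1}\in\mathcal G_0:\mathbf f'\in\mathcal{GEN}_{n+1}^+\}$ is open and dense in $\mathcal G_0$. (b) The set $\{f_{n+1}\in\mathcal G_0:\mathbf f'\in\mathcal{GEN}_{n+1},\ R[\mathbf f']=R\}$ is open and nonempty in $\mathcal G_0$. (c) If $\mathbf f\in\mathcal{GEN}_n^+$, then $\{f_{n+1}\in\mathcal G_0:\mathbf f'\in\mathcal{GEN}_{n+1}^+,\ R[\mathbf f']=R\}$ is open and nonempty in $\mathcal G_0$.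
   Context: Let $\mathcal G$ be the group of strictly increasing continuous maps $f:[-1,1]\to[-1,1]$ with $f(\pm1)=\pm1$, with the sup-norm topology; $i$ is the identity; $\mathcal G_0=\{f\in\mathcal G:\int_{-1}^1 f=0\}$. $f^e(t)=\tfrac12(f(t)+f(-t))$. For $f,g\in\mathcal G$, $Q(f,g)=\int_{-1}^1 f(g^{-1}(t))\,dt$. For $\mathbf f=(f_1,\dots,f_n)\in\mathcal G^n$, $R[\mathbf f]$ is the digraph on $[n]$ with $(i,j)\in R[\mathbf f]$ iff $Q(f_j,f_i)>0$. A tournament on $I$ is a subset of $I\times I$ containing no diagonal pair and exactly one of $(i,j),(j,i)$ for each distinct $i,j$. $\mathcal{GEN}_n$ (generic $n$-tuples) is the set of $\mathbf f\in\mathcal G_0^n$ with $\{i,f_1,\dots,f_n\}$ linearly independent and $Q(f_i,f_j)\neq0$ for all $i\neq j$; $\mathcal{GEN}_n^+$ (strongly generic) is the set of $\mathbf f\in\mathcal G_0^n$ with $\{f_1^e,\dots,f_n^e\}$ linearly independent and $Q(f_i,f_j)\ne0$ for all $i\ne j$. *)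

(* Defs.v *)
From Stdlib Require Import Reals Lra ClassicalEpsilon.
From Coquelicot Require Import Coquelicot.
Open Scope R_scope.

(* Elements of G are represented by functions R -> R; only their values on
   [-1,1] matter. *)
Definition in_I (t : R) : Prop := -1 <= t <= 1.

Definition inG (f : R -> R) : Prop :=
  (forall t, in_I t -> in_I (f t)) /\
  (forall s t, in_I s -> in_I t -> s < t -> f s < f t) /\
  (forall x, in_I x -> forall eps, 0 < eps -> exists delta, 0 < delta /\
      forall y, in_I y -> Rabs (y - x) < delta -> Rabs (f y - f x) < eps) /\
  f (-1) = -1 /\ f 1 = 1.

Definition idI : R -> R := fun t => t.

Definition inG0 (f : R -> R) : Prop := inG f /\ RInt f (-1) 1 = 0.

Definition fe (f : R -> R) : R -> R := fun t => (f t + f (- t)) / 2.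

(* inverse on [-1,1] (chosen classically; for g in G it is the true inverse) *)
Definition ginv (g : R -> R) (t : R) : R :=
  epsilon (inhabits 0) (fun s => in_I s /\ g s = t).

Definition Q (f g : R -> R) : R := RInt (fun t => f (ginv g t)) (-1) 1.

(* n-tuples are represented as  f : nat -> (R -> R), indices 0..n-1 *)
Fixpoint lincomb (n : nat) (c : nat -> R) (f : nat -> R -> R) (t : R) : R :=
  match n with
  | O => 0
  | S m => lincomb m c f t + c m * f m t
  end.

Definition lin_indep_with (h : R -> R) (n : nat) (f : nat -> R -> R) : Prop :=
  forall (c0 : R) (c : nat -> R),
    (forall t, in_I t -> c0 * h t + lincomb n c f t = 0) ->
    c0 = 0 /\ forall k, (k < n)%nat -> c k = 0.

Definition lin_indep (n : nat) (f : nat -> R -> R) : Prop :=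
  forall (c : nat -> R),
    (forall t, in_I t -> lincomb n c f t = 0) ->
    forall k, (k < n)%nat -> c k = 0.

Definition all_G0 (n : nat) (f : nat -> R -> R) : Prop :=
  forall k, (k < n)%nat -> inG0 (f k).

Definition Q_nonzero (n : nat) (f : nat -> R -> R) : Prop :=
  forall i j, (i < n)%nat -> (j < n)%nat -> i <> j -> Q (f i) (f j) <> 0.

Definition GEN (n : nat) (f : nat -> R -> R) : Prop :=
  all_G0 n f /\ lin_indep_with idI n f /\ Q_nonzero n f.

Definition GENp (n : nat) (f : nat -> R -> R) : Prop :=
  all_G0 n f /\ lin_indep n (fun k => fe (f k)) /\ Q_nonzero n f.

Definition Rdig (n : nat) (f : nat -> R -> R) (i j : nat) : Prop :=
  (i < n)%nat /\ (j < n)%nat /\ Q (f j) (f i) > 0.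

Definition tournament (m : nat) (Rel : nat -> nat -> Prop) : Prop :=
  (forall i j, Rel i j -> (i < m)%nat /\ (j < m)%nat) /\
  (forall i, ~ Rel i i) /\
  (forall i j, (i < m)%nat -> (j < m)%nat -> i <> j ->
     (Rel i j \/ Rel j i) /\ ~ (Rel i j /\ Rel j i)).

Definition restricts_to (n : nat) (Rel : nat -> nat -> Prop) (f : nat -> R -> R) : Prop :=
  forall i j, (i < n)%nat -> (j < n)%nat -> (Rel i j <-> Rdig n f i j).

Definition same_rel (A B : nat -> nat -> Prop) : Prop := forall i j, A i j <-> B i j.

Definition extend (n : nat) (f : nat -> R -> R) (g : R -> R) : nat -> R -> R :=
  fun k => if Nat.eqb k n then g else f k.

(* sup-norm ball in G: sup_{[-1,1]} |g - f| < e  (sup is attained for continuous maps) *)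
Definition sup_close (f g : R -> R) (e : R) : Prop :=
  forall t, in_I t -> Rabs (g t - f t) < e.

Definition open_in_G0 (S : (R -> R) -> Prop) : Prop :=
  (forall g, S g -> inG0 g) /\
  forall f, S f -> exists e, 0 < e /\ forall g, inG0 g -> sup_close f g e -> S g.

Definition dense_in_G0 (S : (R -> R) -> Prop) : Prop :=
  forall f, inG0 f -> forall e, 0 < e -> exists g, S g /\ sup_close f g e.

Definition nonempty (S : (R -> R) -> Prop) : Prop := exists g, S g.

(* Main.v *)
Require Import Defs.
From Stdlib Require Import Reals.
From Coquelicot Require Import Coquelicot.
From Stdlib Require Import Lra Lia ClassicalEpsilon Classical FunctionalExtensionality.
Import Defs.
Open Scope R_scope.


Ltac rabs := unfold Rabs in *; repeat match goal with |- context [Rcase_abs ?x] => destruct (Rcase_abs x) | H : context [Rcase_abs ?x] |- _ => destruct (Rcase_abs x) end; try lra.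

Definition clamp (t:R) := Rmax (-1) (Rmin t 1).
Lemma clamp_I t : in_I (clamp t).
Proof. unfold clamp, in_I, Rmax, Rmin. repeat destruct Rle_dec; lra. Qed.
Lemma clamp_id t : in_I t -> clamp t = t.
Proof. unfold clamp, in_I, Rmax, Rmin. intros. repeat destruct Rle_dec; lra. Qed.
Lemma clamp_lip x y : Rabs (clamp x - clamp y) <= Rabs (x - y).
Proof. unfold clamp, Rmax, Rmin. repeat destruct Rle_dec; rabs. Qed.

Lemma cont_of_eps (h:R->R) x : (forall eps, 0<eps -> exists d, 0<d /\ forall y, Rabs (y-x) < d -> Rabs (h y - h x) < eps) -> continuous h x.
Proof. intro H. apply continuity_pt_filterlim.
  unfold continuity_pt, continue_in, limit1_in, limit_in. simpl. unfold R_dist.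
  intros eps Heps. destruct (H eps Heps) as [d [Hd Hy]]. exists d; split; auto.
  intros y [_ Hy']. apply Hy. exact Hy'. Qed.

Definition contI (h : R -> R) : Prop :=
  forall x, in_I x -> forall eps, 0 < eps -> exists delta, 0 < delta /\
      forall y, in_I y -> Rabs (y - x) < delta -> Rabs (h y - h x) < eps.

Lemma contI_G h : inG h -> contI h.
Proof. intros [_ [_ [H _]]]. exact H. Qed.

Lemma contI_clamp h : contI h -> forall x, continuous (fun t => h (clamp t)) x.
Proof. intros H x. apply cont_of_eps. intros eps He.
  destruct (H (clamp x) (clamp_I x) eps He) as [d [Hd Hy]]. exists d; split; auto.
  intros y Hyx. apply Hy. apply clamp_I. eapply Rle_lt_trans; [apply clamp_lip|exact Hyx]. Qed.

Lemma contI_ex_RInt h a b : contI h -> in_I a -> in_I b -> ex_RInt h a b.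
Proof. intros H Ha Hb. apply ex_RInt_ext with (fun t => h (clamp t)).
  - intros x Hx. rewrite clamp_id; auto. unfold in_I in *. 
    unfold Rmin, Rmax in Hx; destruct Rle_dec; lra.
  - apply (ex_RInt_continuous (V:=R_CompleteNormedModule)). intros; apply contI_clamp; auto. Qed.

Lemma contI_unif h : contI h -> forall eps, 0 < eps -> exists delta, 0 < delta /\
  forall x y, in_I x -> in_I y -> Rabs (x - y) < delta -> Rabs (h x - h y) < eps.
Proof. intros H eps He.
  assert (U := Heine (fun t => h (clamp t)) (fun c => -1 <= c <= 1) (compact_P3 (-1) 1)).
  assert (U' : forall x : R, (fun c => -1 <= c <= 1) x -> continuity_pt (fun t => h (clamp t)) x).
  { intros x _. apply continuity_pt_filterlim. apply contI_clamp; auto. }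
  destruct (U U' (mkposreal eps He)) as [d Hd].
  { exists d. split. apply cond_pos. intros x y Hx Hy Hxy.
    specialize (Hd x y Hx Hy Hxy). rewrite !clamp_id in Hd; auto. } Qed.

Lemma frac_lt A eps : 0 <= A -> 0 < eps -> A * (eps / (2 * (A + 1))) < eps / 2.
Proof. intros HA He.
  replace (A * (eps / (2 * (A + 1)))) with ((eps/2) * (A / (A+1))) by (field; lra).
  assert (A / (A+1) < 1).
  { apply (Rmult_lt_reg_r (A+1)); [lra|]. unfold Rdiv; rewrite Rmult_assoc, Rinv_l; lra. }
  assert (0 < eps/2) by lra. nra. Qed.

Lemma contI_plus h1 h2 a b : contI h1 -> contI h2 -> contI (fun t => a * h1 t + b * h2 t).
Proof. intros H1 H2 x Hx eps He.
  pose proof (Rabs_pos a). pose proof (Rabs_pos b).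
  destruct (H1 x Hx (eps / (2 * (Rabs a + 1)))) as [d1 [Hd1 P1]].
  { apply Rdiv_lt_0_compat; auto. lra. }
  destruct (H2 x Hx (eps / (2 * (Rabs b + 1)))) as [d2 [Hd2 P2]].
  { apply Rdiv_lt_0_compat; auto. lra. }
  exists (Rmin d1 d2). split. apply Rmin_pos; auto.
  intros y Hy Hyx. 
  assert (A1 := P1 y Hy (Rlt_le_trans _ _ _ Hyx (Rmin_l _ _))).
  assert (A2 := P2 y Hy (Rlt_le_trans _ _ _ Hyx (Rmin_r _ _))).
  replace (a * h1 y + b * h2 y - (a * h1 x + b * h2 x)) with (a * (h1 y - h1 x) + b * (h2 y - h2 x)) by ring.
  eapply Rle_lt_trans. apply Rabs_triang. rewrite !Rabs_mult.
  assert (Rabs a * Rabs (h1 y - h1 x) <= Rabs a * (eps / (2 * (Rabs a + 1)))).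
  { apply Rmult_le_compat_l; lra. }
  assert (Rabs b * Rabs (h2 y - h2 x) <= Rabs b * (eps / (2 * (Rabs b + 1)))).
  { apply Rmult_le_compat_l; lra. }
  pose proof (frac_lt (Rabs a) eps H He). pose proof (frac_lt (Rabs b) eps H0 He).
  lra. Qed.

Lemma contI_ext h1 h2 : (forall t, in_I t -> h1 t = h2 t) -> contI h1 -> contI h2.
Proof. intros E H x Hx eps He. destruct (H x Hx eps He) as [d [Hd P]]. exists d; split; auto.
  intros y Hy Hyx. rewrite <- !E; auto. Qed.

Lemma contI_const c : contI (fun _ => c).
Proof. intros x Hx eps He. exists 1. split. lra. intros. rewrite Rminus_diag, Rabs_R0; auto. Qed.

Lemma contI_id : contI idI.
Proof. intros x Hx eps He. exists eps. split; auto. Qed.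

Lemma in_I_opp t : in_I t -> in_I (- t).
Proof. unfold in_I; lra. Qed.

Lemma contI_fe h : contI h -> contI (fe h).
Proof. intros H x Hx eps He.
  destruct (H x Hx eps He) as [d1 [Hd1 P1]].
  destruct (H (-x) (in_I_opp x Hx) eps He) as [d2 [Hd2 P2]].
  exists (Rmin d1 d2). split. apply Rmin_pos; auto. intros y Hy Hyx.
  assert (A1 := P1 y Hy (Rlt_le_trans _ _ _ Hyx (Rmin_l _ _))).
  assert (A2 : Rabs (h (-y) - h (-x)) < eps).
  { apply P2. apply in_I_opp; auto. replace (-y - - x) with (-(y-x)) by ring.
    rewrite Rabs_Ropp. exact (Rlt_le_trans _ _ _ Hyx (Rmin_r _ _)). }
  unfold fe. replace ((h y + h (- y)) / 2 - (h x + h (- x)) / 2) with ((h y - h x)/2 + (h (-y) - h (-x))/2) by field.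
  eapply Rle_lt_trans. apply Rabs_triang. unfold Rdiv. rewrite !Rabs_mult.
  rewrite Rabs_inv, (Rabs_right 2) by lra. lra. Qed.

Section GF.
Variable f : R -> R.
Hypothesis Hf : inG f.

Lemma G_I t : in_I t -> in_I (f t).
Proof. destruct Hf as [H _]; auto. Qed.
Lemma G_lt s t : in_I s -> in_I t -> s < t -> f s < f t.
Proof. destruct Hf as [_ [H _]]; auto. Qed.
Lemma G_le s t : in_I s -> in_I t -> s <= t -> f s <= f t.
Proof. intros. destruct (Req_dec s t). subst; lra. left; apply G_lt; auto; lra. Qed.
Lemma G_m1 : f (-1) = -1.
Proof. destruct Hf as [_ [_ [_ [H _]]]]; auto. Qed.
Lemma G_1 : f 1 = 1.
Proof. destruct Hf as [_ [_ [_ [_ H]]]]; auto. Qed.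
Lemma G_inj s t : in_I s -> in_I t -> f s = f t -> s = t.
Proof. intros Hs Ht E. destruct (Rtotal_order s t) as [H|[H|H]]; auto.
  - apply (G_lt s t) in H; auto; lra.
  - apply (G_lt t s) in H; auto; lra. Qed.
Lemma G_lt_rev s t : in_I s -> in_I t -> f s < f t -> s < t.
Proof. intros Hs Ht E. destruct (Rlt_le_dec s t) as [r|r]; auto. apply G_le in r; auto; lra. Qed.
Lemma G_le_rev s t : in_I s -> in_I t -> f s <= f t -> s <= t.
Proof. intros Hs Ht E. destruct (Rle_dec s t) as [r|r]; auto. assert (H2: t < s) by lra. apply G_lt in H2; auto; lra. Qed.

Lemma G_pre t : in_I t -> exists s, in_I s /\ f s = t.
Proof. intros Ht. destruct (Req_dec t (-1)). { exists (-1). split. unfold in_I; lra. rewrite G_m1; auto. }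
  destruct (Req_dec t 1). { exists 1. split. unfold in_I; lra. rewrite G_1; auto. }
  assert (C : continuity (fun x => f (clamp x) - t)).
  { intro x. apply continuity_pt_minus. apply continuity_pt_filterlim. apply contI_clamp. apply contI_G; auto.
    apply continuity_pt_const. intros a b; reflexivity. }
  destruct (IVT _ (-1) 1 C) as [z [Hz Ez]].
  - lra.
  - rewrite clamp_id by (unfold in_I; lra). rewrite G_m1. unfold in_I in Ht; lra.
  - rewrite clamp_id by (unfold in_I; lra). rewrite G_1. unfold in_I in Ht; lra.
  - exists z. rewrite clamp_id in Ez by (unfold in_I; lra). split. unfold in_I; lra. lra. Qed.

Lemma ginv_spec t : in_I t -> in_I (ginv f t) /\ f (ginv f t) = t.
Proof. intros Ht. unfold ginv. apply epsilon_spec. apply G_pre; auto. Qed.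
Lemma ginv_I t : in_I t -> in_I (ginv f t).
Proof. intros; apply ginv_spec; auto. Qed.
Lemma f_ginv t : in_I t -> f (ginv f t) = t.
Proof. intros; apply ginv_spec; auto. Qed.
Lemma ginv_f s : in_I s -> ginv f (f s) = s.
Proof. intros Hs. apply G_inj; auto. apply ginv_I, G_I; auto. rewrite f_ginv; auto. apply G_I; auto. Qed.

Lemma ginv_G : inG (ginv f).
Proof. split; [|split; [|split; [|split]]].
  - apply ginv_I.
  - intros s t Hs Ht Hst. apply G_lt_rev; try apply ginv_I; auto. rewrite !f_ginv; auto.
  - intros y0 Hy0 eps He. set (x0 := ginv f y0).
    assert (Hx0 : in_I x0) by (apply ginv_I; auto).
    assert (Ey0 : f x0 = y0) by (apply f_ginv; auto).
    set (a := Rmax (-1) (x0 - eps/2)). set (b := Rmin 1 (x0 + eps/2)).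
    assert (Ha : in_I a) by (unfold a, in_I, Rmax in *; destruct Rle_dec; lra).
    assert (Hb : in_I b) by (unfold b, in_I, Rmin in *; destruct Rle_dec; lra).
    assert (Hax : a <= x0) by (unfold a, in_I, Rmax in *; destruct Rle_dec; lra).
    assert (Hbx : x0 <= b) by (unfold b, in_I, Rmin in *; destruct Rle_dec; lra).
    set (dl := if Rlt_dec a x0 then f x0 - f a else 1).
    set (du := if Rlt_dec x0 b then f b - f x0 else 1).
    assert (Hdl : 0 < dl). { unfold dl; destruct (Rlt_dec a x0). pose proof (G_lt a x0 Ha Hx0 r); lra. lra. }
    assert (Hdu : 0 < du). { unfold du; destruct (Rlt_dec x0 b). pose proof (G_lt x0 b Hx0 Hb r); lra. lra. }
    exists (Rmin dl du). split. apply Rmin_pos; auto.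
    intros y Hy Hyy. assert (Hz : in_I (ginv f y)) by (apply ginv_I; auto).
    assert (Ez : f (ginv f y) = y) by (apply f_ginv; auto).
    fold x0. apply Rabs_def1.
    + destruct (Rlt_dec (ginv f y - x0) eps) as [L|L]; auto. exfalso.
      assert (Eb : b = x0 + eps/2). { unfold b, Rmin. destruct Rle_dec; auto. unfold in_I in Hz; lra. }
      assert (x0 < b) by lra.
      assert (du = f b - f x0) by (unfold du; destruct (Rlt_dec x0 b); lra).
      assert (f b <= f (ginv f y)) by (apply G_le; auto; lra).
      assert (Rmin dl du <= du) by apply Rmin_r.
      apply Rabs_def2 in Hyy. lra.
    + destruct (Rlt_dec (- eps) (ginv f y - x0)) as [L|L]; auto. exfalso.
      assert (Ea : a = x0 - eps/2). { unfold a, Rmax. destruct Rle_dec; auto. unfold in_I in Hz; lra. }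
      assert (a < x0) by lra.
      assert (dl = f x0 - f a) by (unfold dl; destruct (Rlt_dec a x0); lra).
      assert (f (ginv f y) <= f a) by (apply G_le; auto; lra).
      assert (Rmin dl du <= dl) by apply Rmin_l.
      apply Rabs_def2 in Hyy. lra.
  - rewrite <- G_m1 at 1. apply ginv_f. unfold in_I; lra.
  - rewrite <- G_1 at 1. apply ginv_f. unfold in_I; lra.
Qed.
End GF.

Lemma G_comp u v : inG u -> inG v -> inG (fun t => u (v t)).
Proof. intros Hu Hv. split; [|split; [|split; [|split]]].
  - intros; apply (G_I u); auto; apply (G_I v); auto.
  - intros; apply (G_lt u); try apply (G_I v); auto; apply (G_lt v); auto.
  - intros x Hx eps He. destruct (contI_G u Hu (v x) (G_I v Hv x Hx) eps He) as [d1 [Hd1 P1]].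
    destruct (contI_G v Hv x Hx d1 Hd1) as [d2 [Hd2 P2]]. exists d2; split; auto.
    intros y Hy Hyx. apply P1. apply (G_I v); auto. apply P2; auto.
  - simpl. rewrite (G_m1 v), (G_m1 u); auto.
  - simpl. rewrite (G_1 v), (G_1 u); auto. Qed.

Lemma G_comb u w s : inG u -> inG w -> 0 <= s <= 1 -> inG (fun t => (1-s) * u t + s * w t).
Proof. intros Hu Hw Hs. split; [|split; [|split; [|split]]].
  - intros t Ht. pose proof (G_I u Hu t Ht). pose proof (G_I w Hw t Ht). unfold in_I in *. nra.
  - intros a b Ha Hb Hab. pose proof (G_lt u Hu a b Ha Hb Hab). pose proof (G_lt w Hw a b Ha Hb Hab).
    destruct (Rle_dec (u b - u a) (w b - w a)).
    + assert (0 <= s * ((w b - w a) - (u b - u a))) by (apply Rmult_le_pos; lra). nra.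
    + assert (0 <= (1-s) * ((u b - u a) - (w b - w a))) by (apply Rmult_le_pos; lra). nra.
  - apply contI_plus; apply contI_G; auto.
  - rewrite (G_m1 u), (G_m1 w); auto; ring.
  - rewrite (G_1 u), (G_1 w); auto; ring. Qed.

Lemma G_id : inG idI.
Proof. unfold idI; split; [|split; [|split; [|split]]]; auto. apply contI_id. Qed.

Lemma G_ex_RInt h a b : inG h -> in_I a -> in_I b -> ex_RInt h a b.
Proof. intros; apply contI_ex_RInt; auto; apply contI_G; auto. Qed.

Lemma RInt_const_R a b c : RInt (fun _ => c) a b = (b - a) * c :> R.
Proof. rewrite RInt_const. reflexivity. Qed.

Lemma RInt_point_R (h : R -> R) a : RInt h a a = 0 :> R.
Proof. exact (RInt_point a h). Qed.
Lemma Chasles_R (h : R -> R) a b c : ex_RInt h a b -> ex_RInt h b c -> RInt h a b + RInt h b c = RInt h a c.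
Proof. intros. exact (RInt_Chasles h a b c H H0). Qed.

Lemma telescope_zero (Psi Fm : R -> R) :
  (forall t t', -1 <= t -> t <= t' -> t' <= 1 -> Rabs (Psi t' - Psi t) <= (t'-t)*(Fm t' - Fm t)) ->
  (forall t t', -1 <= t -> t <= t' -> t' <= 1 -> Fm t <= Fm t') -> Psi 1 = Psi (-1).
Proof.
  intros HP HF.
  assert (Hb : forall N, (0 < N)%nat -> Rabs (Psi 1 - Psi (-1)) <= (2 / INR N) * (Fm 1 - Fm (-1))).
  { intros N HN. set (x := fun k => -1 + 2 * INR k / INR N).
    assert (HNr : 0 < INR N) by (apply lt_0_INR; auto).
    assert (Hx : forall M, (M <= N)%nat -> -1 <= x M <= 1).
    { intros M HM. unfold x. apply le_INR in HM. pose proof (pos_INR M).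
      assert (0 <= 2 * INR M / INR N) by (apply Rdiv_le_0_compat; lra).
      assert (2 * INR M / INR N <= 2).
      { apply (Rmult_le_reg_r (INR N)); auto. unfold Rdiv; rewrite Rmult_assoc, Rinv_l; lra. }
      lra. }
    assert (Hstep : forall M, x (S M) - x M = 2 / INR N). {intros; unfold x; rewrite S_INR; field; lra. }
    assert (Hc : forall M, (M <= N)%nat -> Rabs (Psi (x M) - Psi (x 0%nat)) <= (2 / INR N) * (Fm (x M) - Fm (x 0%nat))).
    { induction M; intros HM.
      - rewrite !Rminus_diag, Rabs_R0. lra.
      - assert (IH := IHM ltac:(lia)).
        assert (H1 := Hx M ltac:(lia)). assert (H2 := Hx (S M) HM). assert (H3 := Hstep M).
        assert (0 < 2 / INR N) by (apply Rdiv_lt_0_compat; lra).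
        assert (A := HP (x M) (x (S M)) ltac:(lra) ltac:(lra) ltac:(lra)).
        rewrite H3 in A.
        replace (Psi (x (S M)) - Psi (x 0%nat)) with ((Psi (x (S M)) - Psi (x M)) + (Psi (x M) - Psi (x 0%nat))) by ring.
        eapply Rle_trans. apply Rabs_triang.
        replace (2 / INR N * (Fm (x (S M)) - Fm (x 0%nat))) with
          (2 / INR N * (Fm (x (S M)) - Fm (x M)) + 2 / INR N * (Fm (x M) - Fm (x 0%nat))) by ring.
        apply Rplus_le_compat; auto. }
    assert (E1 : x N = 1) by (unfold x; field; lra). assert (E0 : x 0%nat = -1) by (unfold x; simpl; field; lra).
    specialize (Hc N (le_n N)). rewrite E1, E0 in Hc. exact Hc. }
  destruct (Req_dec (Psi 1) (Psi (-1))) as [E|E]; auto. exfalso.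
  set (e := Rabs (Psi 1 - Psi (-1))). assert (He : 0 < e) by (apply Rabs_pos_lt; lra).
  set (D := Fm 1 - Fm (-1)). assert (HD : 0 <= D) by (assert (Fm (-1) <= Fm 1) by (apply HF; lra); unfold D; lra).
  destruct (archimed_cor1 (e / (2*D+1))) as [N [HN1 HN2]]. apply Rdiv_lt_0_compat; lra.
  specialize (Hb N HN2). fold e D in Hb.
  assert (2*D*(/INR N) <= 2*D*(e/(2*D+1))) by (apply Rmult_le_compat_l; lra).
  assert (E2 : 2*D*(e/(2*D+1)) = e - e/(2*D+1)) by (field; lra).
  assert (0 < e/(2*D+1)) by (apply Rdiv_lt_0_compat; lra).
  assert (E3 : 2 / INR N * D = 2*D*/INR N) by (unfold Rdiv; ring).
  lra.
Qed.

Lemma antisym f g : inG f -> inG g -> Q f g + Q g f = 0.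
Proof.
  intros Hf Hg. set (F := fun t => f (ginv g t)). set (Gf := fun t => g (ginv f t)).
  assert (HF : inG F) by (apply (G_comp f (ginv g)); [auto | apply ginv_G; auto]).
  assert (HG : inG Gf) by (apply (G_comp g (ginv f)); [auto | apply ginv_G; auto]).
  assert (GF : forall t, in_I t -> Gf (F t) = t).
  { intros t Ht. unfold Gf, F. rewrite ginv_f; auto. apply f_ginv; auto. apply ginv_I; auto. }
  set (Psi := fun t => RInt F (-1) t + RInt Gf (-1) (F t) - F t * t + 1).
  assert (E1 : Psi 1 = Q f g + Q g f).
  { unfold Psi, Q. fold F Gf. rewrite (G_1 F HF). ring. }
  assert (E0 : Psi (-1) = 0).
  { unfold Psi. rewrite (G_m1 F HF), !RInt_point_R. ring. }
  rewrite <- E1, <- E0. apply telescope_zero with F.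
  2: { intros. apply (G_le F HF); unfold in_I; lra. }
  intros t t' H1 H2 H3.
  assert (It : in_I t) by (unfold in_I; lra). assert (It' : in_I t') by (unfold in_I; lra).
  assert (Im1 : in_I (-1)) by (unfold in_I; lra).
  pose proof (G_I F HF t It) as IFt. pose proof (G_I F HF t' It') as IFt'.
  assert (FF : F t <= F t') by (apply (G_le F HF); auto).
  assert (C1 := Chasles_R F (-1) t t' (G_ex_RInt F _ _ HF Im1 It) (G_ex_RInt F _ _ HF It It')).
  assert (C2 := Chasles_R Gf (-1) (F t) (F t') (G_ex_RInt Gf _ _ HG Im1 IFt) (G_ex_RInt Gf _ _ HG IFt IFt')).
  assert (B1 : (t'-t) * F t <= RInt F t t').
  { rewrite <- RInt_const_R. apply RInt_le; auto. apply ex_RInt_const. apply G_ex_RInt; auto.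
    intros x Hx. apply (G_le F HF); unfold in_I in *; lra. }
  assert (B2 : RInt F t t' <= (t'-t) * F t').
  { rewrite <- RInt_const_R. apply RInt_le; auto. apply G_ex_RInt; auto. apply ex_RInt_const.
    intros x Hx. apply (G_le F HF); unfold in_I in *; lra. }
  assert (B3 : (F t' - F t) * t <= RInt Gf (F t) (F t')).
  { rewrite <- RInt_const_R. apply RInt_le; auto. apply ex_RInt_const. apply G_ex_RInt; auto.
    intros x Hx. rewrite <- (GF t It) at 1. apply (G_le Gf HG); unfold in_I in *; lra. }
  assert (B4 : RInt Gf (F t) (F t') <= (F t' - F t) * t').
  { rewrite <- RInt_const_R. apply RInt_le; auto. apply G_ex_RInt; auto. apply ex_RInt_const.
    intros x Hx. rewrite <- (GF t' It'). apply (G_le Gf HG); unfold in_I in *; lra. }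
  unfold Psi. apply Rabs_le. split; lra.
Qed.

Lemma Q_self g : inG g -> Q g g = 0.
Proof. intros Hg. pose proof (antisym g g Hg Hg). lra. Qed.

Lemma Q_opp f g : inG f -> inG g -> Q g f = - Q f g.
Proof. intros. pose proof (antisym f g H H0). lra. Qed.

Lemma Q_id h : Q h idI = RInt h (-1) 1.
Proof. unfold Q. apply RInt_ext. intros x Hx. 
  assert (E := ginv_f idI G_id x). change (idI x) with x in E. rewrite E; auto.
  unfold in_I, Rmin, Rmax in *; destruct Rle_dec; lra. Qed.

Lemma Q_ex u f : contI u -> inG f -> forall a b, in_I a -> in_I b -> ex_RInt (fun t => u (ginv f t)) a b.
Proof. intros Hu Hf a b Ha Hb. apply contI_ex_RInt; auto.
  intros x Hx eps He. destruct (Hu (ginv f x) (ginv_I f Hf x Hx) eps He) as [d1 [Hd1 P1]].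
  destruct (contI_G _ (ginv_G f Hf) x Hx d1 Hd1) as [d2 [Hd2 P2]]. exists d2; split; auto.
  intros y Hy Hyx. apply P1. apply ginv_I; auto. apply P2; auto. Qed.

Lemma Q_lin u w a b f : contI u -> contI w -> inG f ->
  Q (fun t => a * u t + b * w t) f = a * Q u f + b * Q w f.
Proof. intros Hu Hw Hf. unfold Q.
  assert (Im1 : in_I (-1)) by (unfold in_I; lra). assert (I1 : in_I 1) by (unfold in_I; lra).
  pose proof (Q_ex u f Hu Hf _ _ Im1 I1). pose proof (Q_ex w f Hw Hf _ _ Im1 I1).
  assert (E := RInt_plus (V:=R_CompleteNormedModule) (fun x => scal a (u (ginv f x))) (fun x => scal b (w (ginv f x))) (-1) 1
     (ex_RInt_scal _ _ _ _ H) (ex_RInt_scal _ _ _ _ H0)).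
  rewrite (RInt_scal (V:=R_CompleteNormedModule) _ _ _ _ H), (RInt_scal (V:=R_CompleteNormedModule) _ _ _ _ H0) in E.
  exact E. Qed.

Lemma Q_diff_bound u w f e : contI u -> contI w -> inG f -> 
  (forall t, in_I t -> Rabs (u t - w t) <= e) -> Rabs (Q u f - Q w f) <= 2 * e.
Proof. intros Hu Hw Hf He.
  replace (Q u f - Q w f) with (Q (fun t => 1 * u t + (-1) * w t) f) by (rewrite Q_lin; auto; ring).
  unfold Q. replace (2 * e) with ((1 - -1) * e) by ring.
  apply abs_RInt_le_const. lra.
  apply (Q_ex (fun t => 1 * u t + (-1) * w t)). apply contI_plus; auto. auto. unfold in_I; lra. unfold in_I; lra.
  intros t Ht. replace (1 * u (ginv f t) + -1 * w (ginv f t)) with (u (ginv f t) - w (ginv f t)) by ring.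
  apply He. apply ginv_I; auto; unfold in_I; lra. Qed.

Lemma Q_bound u f : inG u -> inG f -> Rabs (Q u f) <= 2.
Proof. intros Hu Hf. unfold Q. replace 2 with ((1 - -1) * 1) by ring.
  apply abs_RInt_le_const. lra. apply Q_ex; auto. apply contI_G; auto. unfold in_I; lra. unfold in_I; lra.
  intros t Ht. assert (in_I (u (ginv f t))). apply G_I; auto. apply ginv_I; auto; unfold in_I; lra.
  unfold in_I in H. apply Rabs_le; lra. Qed.

Fixpoint lc {X : Type} (m:nat) (c: nat -> R) (phi: nat -> X -> R) (x:X) : R :=
  match m with O => 0 | S m' => lc m' c phi x + c m' * phi m' x end.
Fixpoint sa (m:nat) (c:nat->R) : R := match m with O => 0 | S m' => sa m' c + Rabs (c m') end.
Definition indep {X : Type} (D : X -> Prop) m (phi : nat -> X -> R) :=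
  forall c, (forall x, D x -> lc m c phi x = 0) -> forall k, (k<m)%nat -> c k = 0.

Lemma lincomb_lc m c f t : lincomb m c f t = lc m c f t.
Proof. induction m; simpl; auto. rewrite IHm; auto. Qed.

Section LC.
Context {X : Type}.

Lemma lc_ext m c c' (phi phi' : nat -> X -> R) x x' : (forall k, (k<m)%nat -> c k = c' k) ->
  (forall k, (k<m)%nat -> phi k x = phi' k x') -> lc m c phi x = lc m c' phi' x'.
Proof. induction m; intros; simpl; auto. rewrite IHm, H, H0; auto. Qed.

Lemma sa_ext m c c' : (forall k, (k<m)%nat -> c k = c' k) -> sa m c = sa m c'.
Proof. induction m; intros; simpl; auto. rewrite IHm, H; auto. Qed.

Lemma sa_pos m c : 0 <= sa m c.
Proof. induction m; simpl. lra. pose proof (Rabs_pos (c m)); lra. Qed.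

Lemma sa_ge m c k : (k<m)%nat -> Rabs (c k) <= sa m c.
Proof. induction m; intros; [lia|]. simpl. destruct (Nat.eq_dec k m).
  subst. pose proof (sa_pos m c); lra. pose proof (Rabs_pos (c m)). assert (Rabs (c k) <= sa m c) by (apply IHm; lia). lra. Qed.

Lemma sa_zero m c : sa m c = 0 -> forall k, (k<m)%nat -> c k = 0.
Proof. intros. pose proof (sa_ge m c k H0). pose proof (Rabs_pos (c k)).
  destruct (Req_dec (c k) 0); auto. pose proof (Rabs_pos_lt _ H3). lra. Qed.

Lemma lc_zero_coef m (phi : nat -> X -> R) x : lc m (fun _ => 0) phi x = 0.
Proof. induction m; simpl; auto. rewrite IHm; ring. Qed.

Lemma lc_zero_fun m c (phi : nat -> X -> R) x : (forall k, (k<m)%nat -> phi k x = 0) -> lc m c phi x = 0.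
Proof. induction m; simpl; intros; auto. rewrite IHm, H; auto. ring. Qed.

Lemma lc_diff_bound m c (phi psi : nat -> X -> R) x y B :
  (forall k, (k<m)%nat -> Rabs (phi k x - psi k y) <= B) -> Rabs (lc m c phi x - lc m c psi y) <= sa m c * B.
Proof. induction m; intros H; simpl. rewrite Rminus_diag, Rabs_R0; lra.
  replace (lc m c phi x + c m * phi m x - (lc m c psi y + c m * psi m y)) with
    ((lc m c phi x - lc m c psi y) + c m * (phi m x - psi m y)) by ring.
  eapply Rle_trans. apply Rabs_triang. rewrite Rabs_mult.
  assert (Rabs (c m) * Rabs (phi m x - psi m y) <= Rabs (c m) * B) by (apply Rmult_le_compat_l; [apply Rabs_pos| apply H; lia]).
  assert (Rabs (lc m c phi x - lc m c psi y) <= sa m c * B) by (apply IHm; intros; apply H; lia).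
  lra. Qed.

Lemma lc_bound m c (phi : nat -> X -> R) x B :
  (forall k, (k<m)%nat -> Rabs (phi k x) <= B) -> Rabs (lc m c phi x) <= sa m c * B.
Proof. intros H. replace (lc m c phi x) with (lc m c phi x - lc m c (fun _ _ => 0) x).
  apply lc_diff_bound. intros; rewrite Rminus_0_r; auto.
  rewrite (lc_zero_fun m c (fun _ _ => 0) x (fun _ _ => eq_refl)); ring. Qed.

Lemma lc_lin m c (phi psi : nat -> X -> R) a b x :
  lc m c (fun k x => a * phi k x + b * psi k x) x = a * lc m c phi x + b * lc m c psi x.
Proof. induction m; simpl. ring. rewrite IHm; ring. Qed.

Lemma lc_coef_lin m c1 c2 (phi : nat -> X -> R) a b x :
  lc m (fun k => a * c1 k + b * c2 k) phi x = a * lc m c1 phi x + b * lc m c2 phi x.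
Proof. induction m; simpl. ring. rewrite IHm; ring. Qed.

Lemma lc_elim_form m c (phi : nat -> X -> R) (a : nat -> R) (w : X -> R) x :
  lc m c (fun k x => phi k x - a k * w x) x = lc m c phi x - lc m c (fun k _ => a k) x * w x.
Proof. induction m; simpl. ring. rewrite IHm; ring. Qed.

Lemma indep_last_nonzero (D : X -> Prop) m phi : indep D (S m) phi -> exists x, D x /\ phi m x <> 0.
Proof. intros H. apply NNPP; intro C.
  specialize (H (fun k => if Nat.eqb k m then 1 else 0)).
  assert (E : (if Nat.eqb m m then 1 else 0) = 0).
  { apply H; [|lia]. intros x Hx. simpl. rewrite Nat.eqb_refl.
    rewrite (lc_ext m _ (fun _ => 0) phi phi x x). rewrite lc_zero_coef.
    destruct (Req_dec (phi m x) 0) as [E|E]. rewrite E; ring. exfalso; apply C; exists x; auto.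
    intros k Hk. destruct (Nat.eqb_spec k m); auto; lia. auto. }
  rewrite Nat.eqb_refl in E. lra. Qed.

Lemma indep_elim (D : X -> Prop) m phi x0 : indep D (S m) phi -> phi m x0 <> 0 ->
  indep D m (fun k x => phi k x - (phi k x0 / phi m x0) * phi m x).
Proof. intros H Hn c Hc k Hk.
  set (a := fun k => phi k x0 / phi m x0).
  set (d := lc m c (fun k (_:X) => a k) x0).
  set (c' := fun k => if Nat.eqb k m then - d else c k).
  assert (E : forall k, (k<m)%nat -> c' k = c k).
  { intros j Hj. unfold c'. destruct (Nat.eqb_spec j m); auto; lia. }
  rewrite <- E; auto. apply H; [|lia]. intros x Hx. simpl.
  rewrite (lc_ext m c' c phi phi x x E (fun _ _ => eq_refl)).
  specialize (Hc x Hx). rewrite (lc_elim_form m c phi (fun k => phi k x0 / phi m x0) (phi m) x) in Hc.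
  assert (Ed : lc m c (fun k (_:X) => phi k x0 / phi m x0) x = d) by (apply lc_ext; auto).
  rewrite Ed in Hc. unfold c'. rewrite Nat.eqb_refl. lra. Qed.

Lemma quant (D : X -> Prop) (x00 : X) (HD : D x00) : forall m phi K, 0 < K ->
  (forall k x, (k<m)%nat -> D x -> Rabs (phi k x) <= K) -> indep D m phi ->
  exists d, 0 < d /\ forall c, exists x, D x /\ d * sa m c <= Rabs (lc m c phi x).
Proof. induction m; intros phi K HK Hb Hi.
  - exists 1. split. lra. intros c. exists x00. split; auto. simpl. rewrite Rmult_0_r. apply Rabs_pos.
  - destruct (indep_last_nonzero D m phi Hi) as [xs [Hxs Hn]].
    set (r0 := phi m xs). fold r0 in Hn.
    set (a := fun k => phi k xs / r0).
    set (psi := fun k x => phi k x - a k * phi m x).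
    assert (Hr : 0 < Rabs r0) by (apply Rabs_pos_lt; auto).
    set (L := K / Rabs r0).
    assert (HL : 0 <= L) by (unfold L; apply Rdiv_le_0_compat; lra).
    assert (Ha : forall k, (k<m)%nat -> Rabs (a k) <= L).
    { intros k Hk. unfold a, L. unfold Rdiv. rewrite Rabs_mult, Rabs_inv.
      apply Rmult_le_compat_r. left; apply Rinv_0_lt_compat; auto. apply Hb; auto. }
    assert (Hpsi : forall k x, (k<m)%nat -> D x -> Rabs (psi k x) <= K + L*K).
    { intros k x Hk Hx. unfold psi. eapply Rle_trans. apply Rabs_triang. rewrite Rabs_Ropp, Rabs_mult.
      assert (Rabs (phi k x) <= K) by (apply Hb; auto).
      assert (Rabs (a k) * Rabs (phi m x) <= L * K).
      { apply Rmult_le_compat; try apply Rabs_pos. apply Ha; auto. apply Hb; auto. }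
      lra. }
    assert (Hi' : indep D m psi) by (apply (indep_elim D m phi xs Hi Hn)).
    destruct (IHm psi (K + L*K) ltac:(nra) Hpsi Hi') as [d' [Hd' Hq]].
    set (M1 := 1 + L + d'/(2*K)).
    assert (HM1 : 0 < M1) by (unfold M1; assert (0 < d'/(2*K)) by (apply Rdiv_lt_0_compat; lra); lra).
    set (d1 := d'/(2*M1)).
    set (M2 := 1 + (1+L)*(2*K/d')).
    assert (HM2 : 0 < M2) by (unfold M2; assert (0 < 2*K/d') by (apply Rdiv_lt_0_compat; lra); nra).
    set (d2 := Rabs r0 / M2).
    assert (Hd1 : 0 < d1) by (unfold d1; apply Rdiv_lt_0_compat; lra).
    assert (Hd2 : 0 < d2) by (unfold d2; apply Rdiv_lt_0_compat; lra).
    exists (Rmin d1 d2). split. apply Rmin_pos; auto.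
    intros c. set (S' := sa m c).
    set (ca := lc m c (fun k (_:X) => a k) xs).
    set (dd := c m + ca).
    assert (Key : forall x, lc (S m) c phi x = lc m c psi x + dd * phi m x).
    { intros x. simpl. unfold psi. rewrite lc_elim_form.
      assert (lc m c (fun k (_:X) => a k) x = ca) by (apply lc_ext; auto). rewrite H. unfold dd. ring. }
    assert (Hsa : sa (S m) c = S' + Rabs (c m)) by reflexivity.
    assert (Hca : Rabs ca <= S' * L) by (apply lc_bound; auto).
    assert (Hcm : Rabs (c m) <= Rabs dd + S' * L).
    { replace (c m) with (dd - ca) by (unfold dd; ring). eapply Rle_trans. apply Rabs_triang. rewrite Rabs_Ropp. lra. }
    assert (HS' : 0 <= S') by apply sa_pos.
    destruct (Rle_dec (Rabs dd * K) (d' * S' / 2)) as [C1|C1].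
    + destruct (Hq c) as [x' [Hx' Hv]]. fold S' in Hv. exists x'. split; auto.
      assert (Hdd : Rabs dd <= d' * S' / (2 * K)).
      { apply (Rmult_le_reg_r K); auto. replace (d' * S' / (2 * K) * K) with (d' * S' / 2) by (field; lra). lra. }
      assert (Hs1 : sa (S m) c <= M1 * S').
      { rewrite Hsa. unfold M1. replace ((1 + L + d' / (2 * K)) * S') with (S' + S' * L + d' * S' / (2 * K)) by (field; lra). lra. }
      assert (HB : Rabs (dd * phi m x') <= Rabs dd * K).
      { rewrite Rabs_mult. apply Rmult_le_compat_l. apply Rabs_pos. apply Hb; auto. }
      assert (HV : Rabs (lc m c psi x') <= Rabs (lc (S m) c phi x') + Rabs (dd * phi m x')).
      { rewrite Key. replace (lc m c psi x') with ((lc m c psi x' + dd * phi m x') + - (dd * phi m x')) at 1 by ring.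
        eapply Rle_trans. apply Rabs_triang. rewrite Rabs_Ropp. lra. }
      assert (Rmin d1 d2 * sa (S m) c <= d1 * (M1 * S')).
      { apply Rle_trans with (d1 * sa (S m) c). apply Rmult_le_compat_r. apply sa_pos. apply Rmin_l.
        apply Rmult_le_compat_l; lra. }
      assert (d1 * (M1 * S') = d' * S' / 2) by (unfold d1; field; lra).
      lra.
    + exists xs. split; auto.
      assert (HS2 : S' <= 2 * K * Rabs dd / d').
      { apply (Rmult_le_reg_r d'); auto. replace (2 * K * Rabs dd / d' * d') with (2 * (Rabs dd * K)) by (field; lra). lra. }
      assert (Hs2 : sa (S m) c <= Rabs dd * M2).
      { rewrite Hsa. unfold M2.
        assert ((1+L) * S' <= (1+L) * (2 * K * Rabs dd / d')) by (apply Rmult_le_compat_l; lra).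
        replace (Rabs dd * (1 + (1 + L) * (2 * K / d'))) with (Rabs dd + (1+L) * (2 * K * Rabs dd / d')) by (field; lra).
        lra. }
      assert (Ev : lc (S m) c phi xs = dd * r0).
      { assert (Z : lc m c psi xs = 0).
        { apply lc_zero_fun. intros k Hk. unfold psi, a. fold r0. field. auto. }
        rewrite Key, Z. fold r0. ring. }
      rewrite Ev, Rabs_mult.
      apply Rle_trans with (d2 * sa (S m) c). apply Rmult_le_compat_r. apply sa_pos. apply Rmin_r.
      apply Rle_trans with (d2 * (Rabs dd * M2)). apply Rmult_le_compat_l; lra.
      unfold d2. right. field. lra.
Qed.
End LC.

Fixpoint rdot (N:nat) (u v : nat -> R) : R := match N with O => 0 | S N' => rdot N' u v + u N' * v N' end.

Lemma rdot_lc N u v : rdot N u v = lc N v (fun k (_:unit) => u k) tt.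
Proof. induction N; simpl; auto. rewrite IHN; ring. Qed.

Lemma rdot_ext N u u' v v' : (forall k, (k<N)%nat -> u k = u' k /\ v k = v' k) -> rdot N u v = rdot N u' v'.
Proof. induction N; simpl; intros; auto. destruct (H N) as [A B]; [lia|]. rewrite A, B, IHN; [reflexivity|]. intros; apply H; lia. Qed.

Lemma rdot_sub N u w a v : rdot N (fun k => u k - a * w k) v = rdot N u v - a * rdot N w v.
Proof. induction N; simpl. ring. rewrite IHN; ring. Qed.

Lemma rdot_update N u v ks mu : (ks < N)%nat ->
  rdot N u (fun k => if Nat.eqb k ks then v k + mu else v k) = rdot N u v + u ks * mu.
Proof. intros Hk. assert (G : forall M, rdot M u (fun k => if Nat.eqb k ks then v k + mu else v k) =
   rdot M u v + (if Nat.ltb ks M then u ks * mu else 0)).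
  { induction M as [|M IHM]; simpl. destruct (Nat.ltb ks 0); auto; ring. rewrite IHM. destruct (Nat.eqb_spec M ks); destruct (Nat.ltb_spec ks M);
    destruct (Nat.ltb_spec ks (S M)); try lia; subst; ring. }
  rewrite G. destruct (Nat.ltb_spec ks N); try lia. auto. Qed.

Lemma solver N : forall p (r : nat -> nat -> R), indep (fun k => (k < N)%nat) p r ->
  forall y, exists v, forall j, (j < p)%nat -> rdot N (r j) v = y j.
Proof. induction p; intros r Hi y.
  - exists (fun _ => 0). intros; lia.
  - destruct (indep_last_nonzero _ p r Hi) as [ks [Hks Hn]].
    set (a := fun j => r j ks / r p ks).
    set (r' := fun j k => r j k - (r j ks / r p ks) * r p k).
    assert (Hi' : indep (fun k => (k < N)%nat) p r') by (apply indep_elim; auto).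
    destruct (IHp r' Hi' (fun j => y j - a j * y p)) as [v' Hv'].
    set (mu := (y p - rdot N (r p) v') / r p ks).
    exists (fun k => if Nat.eqb k ks then v' k + mu else v' k).
    intros j Hj. rewrite rdot_update; auto.
    destruct (Nat.eq_dec j p).
    + subst. unfold mu. field. auto.
    + assert (Hj' : (j < p)%nat) by lia. specialize (Hv' j Hj'). unfold r' in Hv'.
      rewrite rdot_sub in Hv'. unfold a in Hv'.
      assert (rdot N (r j) v' = y j - r j ks / r p ks * y p + r j ks / r p ks * rdot N (r p) v') by lra.
      rewrite H. unfold mu. field. auto.
Qed.

Lemma RInt_ext_R (f g : R -> R) a b : (forall x, Rmin a b < x < Rmax a b -> f x = g x) -> RInt f a b = RInt g a b :> R.
Proof. apply RInt_ext. Qed.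
Lemma RInt_plus_R (f g : R -> R) a b : ex_RInt f a b -> ex_RInt g a b -> RInt (fun x => f x + g x) a b = RInt f a b + RInt g a b :> R.
Proof. intros. exact (RInt_plus (V:=R_CompleteNormedModule) f g a b H H0). Qed.
Lemma RInt_scal_R (f : R -> R) a b l : ex_RInt f a b -> RInt (fun x => l * f x) a b = l * RInt f a b :> R.
Proof. intros. exact (RInt_scal (V:=R_CompleteNormedModule) f a b l H). Qed.
Lemma ex_RInt_plus_R (f g : R -> R) a b : ex_RInt f a b -> ex_RInt g a b -> ex_RInt (fun x => f x + g x) a b.
Proof. intros. exact (ex_RInt_plus (V:=R_NormedModule) f g a b H H0). Qed.
Lemma ex_RInt_scal_R (f : R -> R) a b l : ex_RInt f a b -> ex_RInt (fun x => l * f x) a b.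
Proof. intros. exact (ex_RInt_scal (V:=R_NormedModule) f a b l H). Qed.

Lemma lip_cont (h : R -> R) L x : 0 <= L -> (forall x y, Rabs (h x - h y) <= L * Rabs (x - y)) -> continuous h x.
Proof. intros HL H. apply cont_of_eps. intros eps He. exists (eps / (L+1)). split.
  apply Rdiv_lt_0_compat; lra. intros y Hy. eapply Rle_lt_trans. apply H.
  apply Rle_lt_trans with (L * (eps / (L+1))). apply Rmult_le_compat_l; lra.
  replace (L * (eps / (L+1))) with (eps - eps/(L+1)) by (field; lra).
  assert (0 < eps/(L+1)) by (apply Rdiv_lt_0_compat; lra). lra. Qed.

Lemma lip_ex_RInt (h : R -> R) L a b : 0 <= L -> (forall x y, Rabs (h x - h y) <= L * Rabs (x - y)) -> ex_RInt h a b.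
Proof. intros. apply (ex_RInt_continuous (V:=R_CompleteNormedModule)). intros. apply lip_cont with L; auto. Qed.

Lemma lip_contI (h : R -> R) L : 0 <= L -> (forall x y, Rabs (h x - h y) <= L * Rabs (x - y)) -> contI h.
Proof. intros HL H x Hx eps He. exists (eps / (L+1)). split.
  apply Rdiv_lt_0_compat; lra. intros y _ Hy. eapply Rle_lt_trans. apply H.
  apply Rle_lt_trans with (L * (eps / (L+1))). apply Rmult_le_compat_l; lra.
  replace (L * (eps / (L+1))) with (eps - eps/(L+1)) by (field; lra).
  assert (0 < eps/(L+1)) by (apply Rdiv_lt_0_compat; lra). lra. Qed.

Lemma RInt_affine p q a b : RInt (fun x => p * x + q) a b = p * (b*b - a*a) / 2 + q * (b - a) :> R.
Proof. apply is_RInt_unique.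
  replace (p * (b*b - a*a) / 2 + q * (b - a)) with (minus ((fun x => p * x * x / 2 + q * x) b) ((fun x => p * x * x / 2 + q * x) a)).
  2: { unfold minus, plus, opp; simpl. field. }
  apply (is_RInt_derive (V:=R_CompleteNormedModule) (fun x => p * x * x / 2 + q * x)).
  - intros x _. auto_derive; auto. field.
  - intros x _. apply lip_cont with (Rabs p). apply Rabs_pos. intros y z.
    replace (p * y + q - (p * z + q)) with (p * (y - z)) by ring. rewrite Rabs_mult. lra. Qed.

Fixpoint ssum (M:nat) (g:nat->R) : R := match M with O => 0 | S M' => ssum M' g + g M' end.
Lemma ssum_ext M g g' : (forall k, (k<M)%nat -> g k = g' k) -> ssum M g = ssum M g'.
Proof. induction M; simpl; intros; auto. rewrite IHM, H; auto. Qed.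
Lemma ssum_lin M g h a b : ssum M (fun k => a * g k + b * h k) = a * ssum M g + b * ssum M h.
Proof. induction M; simpl. ring. rewrite IHM; ring. Qed.
Lemma ssum_tele M F : ssum M (fun k => F (S k) - F k) = F M - F O.
Proof. induction M; simpl. ring. rewrite IHM; ring. Qed.
Lemma lc_ssum {X} M c (a : nat -> R) (x : X) : lc M c (fun k _ => a k) x = ssum M (fun k => c k * a k).
Proof. induction M; simpl; auto. rewrite IHM; auto. Qed.
Lemma rdot_ssum N u v : rdot N u v = ssum N (fun k => u k * v k).
Proof. induction N; simpl; auto. rewrite IHN; auto. Qed.

Lemma lc_sub {X} m c (phi : nat -> X -> R) x y : lc m c phi x - lc m c phi y = ssum m (fun k => c k * (phi k x - phi k y)).
Proof. induction m; simpl. ring. rewrite <- IHm. ring. Qed.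

Lemma ssum_le M g h : (forall k, (k<M)%nat -> g k <= h k) -> ssum M g <= ssum M h.
Proof. induction M; simpl; intros. lra. assert (g M <= h M) by (apply H; lia). assert (ssum M g <= ssum M h) by (apply IHM; intros; apply H; lia). lra. Qed.

Lemma ssum_single M k v : (k < M)%nat -> ssum M (fun l => if Nat.eqb l k then v else 0) = v.
Proof. intros Hk. assert (G : forall M', ssum M' (fun l => if Nat.eqb l k then v else 0) = if Nat.ltb k M' then v else 0).
  { induction M'; simpl; auto. rewrite IHM'. destruct (Nat.eqb_spec M' k); destruct (Nat.ltb_spec k M');
    destruct (Nat.ltb_spec k (S M')); try lia; ring. }
  rewrite G. destruct (Nat.ltb_spec k M); auto; lia. Qed.

Lemma RInt_ssum M (phi : nat -> R -> R) (c : nat -> R) a b : (forall k, (k<M)%nat -> ex_RInt (phi k) a b) ->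
  ex_RInt (fun x => lc M c phi x) a b /\ (RInt (fun x => lc M c phi x) a b = ssum M (fun k => c k * RInt (phi k) a b) :> R).
Proof. induction M; intros H; simpl.
  - split. apply (ex_RInt_const (V:=R_NormedModule)). rewrite RInt_const_R; ring.
  - destruct IHM as [E1 E2]. intros; apply H; lia.
    assert (E3 : ex_RInt (phi M) a b) by (apply H; lia).
    split. apply ex_RInt_plus_R; auto. apply ex_RInt_scal_R; auto.
    rewrite (RInt_plus_R (fun x => lc M c phi x) (fun x => c M * phi M x)); auto. rewrite RInt_scal_R, E2; auto. apply ex_RInt_scal_R; auto. Qed.

Lemma RInt_chain (F : R -> R) (y : nat -> R) M : (forall k, (k<M)%nat -> ex_RInt F (y k) (y (S k))) ->
  ex_RInt F (y O) (y M) /\ (RInt F (y O) (y M) = ssum M (fun k => RInt F (y k) (y (S k))) :> R).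
Proof. induction M; intros H; simpl.
  - split. apply ex_RInt_point. apply RInt_point_R.
  - destruct IHM as [E1 E2]. intros; apply H; lia.
    assert (E3 : ex_RInt F (y M) (y (S M))) by (apply H; lia).
    split. eapply ex_RInt_Chasles; eauto. rewrite <- E2. symmetry. apply Chasles_R; auto. Qed.

Definition len (xn : nat -> R) (k:nat) (x:R) : R := Rmax 0 (Rmin x (xn (S k)) - xn k).
Definition PL (xn : nat -> R) (N:nat) (c : nat -> R) (x:R) : R := -1 + lc N c (len xn) x.

Lemma len_lip xn k x y : Rabs (len xn k x - len xn k y) <= 1 * Rabs (x - y).
Proof. unfold len, Rmax, Rmin. repeat destruct Rle_dec; rabs. Qed.
Lemma len_mono xn k x y : x <= y -> len xn k x <= len xn k y.
Proof. unfold len, Rmax, Rmin. intros; repeat destruct Rle_dec; lra. Qed.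
Lemma len_nonneg xn k x : 0 <= len xn k x.
Proof. unfold len, Rmax. destruct Rle_dec; lra. Qed.
Lemma len_low xn k x : x <= xn k -> len xn k x = 0.
Proof. unfold len, Rmax, Rmin. intros; repeat destruct Rle_dec; lra. Qed.
Lemma len_high xn k x : xn k <= xn (S k) -> xn (S k) <= x -> len xn k x = xn (S k) - xn k.
Proof. unfold len, Rmax, Rmin. intros; repeat destruct Rle_dec; lra. Qed.
Lemma len_mid xn k x : xn k <= x <= xn (S k) -> len xn k x = x - xn k.
Proof. unfold len, Rmax, Rmin. intros; repeat destruct Rle_dec; lra. Qed.

Section PLsec.
Variable xn : nat -> R.
Variable N : nat.
Hypothesis x0 : xn O = -1.
Hypothesis xN : xn N = 1.
Hypothesis xinc : forall k, (k < N)%nat -> xn k < xn (S k).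

Lemma nodes_mono a b : (a <= b)%nat -> (b <= N)%nat -> xn a <= xn b.
Proof. intros Hab HbN. induction b. assert (a = O) by lia; subst; lra.
  destruct (Nat.eq_dec a (S b)). subst; lra.
  assert (xn a <= xn b) by (apply IHb; lia). assert (xn b < xn (S b)) by (apply xinc; lia). lra. Qed.

Lemma nodes_I k : (k <= N)%nat -> in_I (xn k).
Proof. intros. split. rewrite <- x0. apply nodes_mono; lia. rewrite <- xN. apply nodes_mono; lia. Qed.

Lemma sum_len M x : (M <= N)%nat -> -1 <= x -> lc M (fun _ => 1) (len xn) x = Rmin x (xn M) + 1.
Proof. induction M; intros HM Hx; simpl.
  - rewrite x0. unfold Rmin; destruct Rle_dec; lra.
  - rewrite IHM by (lia || lra). assert (xn M < xn (S M)) by (apply xinc; lia).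
    unfold len, Rmin, Rmax. repeat destruct Rle_dec; lra. Qed.

Variable c : nat -> R.
Variable mu : R.
Hypothesis Hmu : 0 < mu.
Hypothesis cpos : forall k, (k < N)%nat -> mu <= c k.
Hypothesis csum : ssum N (fun k => c k * (xn (S k) - xn k)) = 2.

Lemma lc_le_coef {X} m (c1 c2 : nat -> R) (psi : nat -> X -> R) x :
  (forall k, (k<m)%nat -> c1 k <= c2 k /\ 0 <= psi k x) -> lc m c1 psi x <= lc m c2 psi x.
Proof. induction m; simpl; intros H. lra. destruct (H m) as [A B]; [lia|].
  assert (lc m c1 psi x <= lc m c2 psi x) by (apply IHm; intros; apply H; lia). nra. Qed.

Lemma PL_lip x y : Rabs (PL xn N c x - PL xn N c y) <= sa N c * Rabs (x - y).
Proof. unfold PL. replace (-1 + lc N c (len xn) x - (-1 + lc N c (len xn) y)) with (lc N c (len xn) x - lc N c (len xn) y) by ring.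
  apply lc_diff_bound. intros. rewrite <- (Rmult_1_l (Rabs (x - y))). apply len_lip. Qed.

Lemma PL_incr x y : -1 <= x -> x <= y -> y <= 1 -> mu * (y - x) <= PL xn N c y - PL xn N c x.
Proof. intros. unfold PL.
  assert (E : lc N (fun _ => mu) (len xn) y - lc N (fun _ => mu) (len xn) x = mu * (y - x)).
  { replace (fun _ : nat => mu) with (fun k : nat => mu * (fun _ => 1) k + 0 * (fun _ => 0) k) by (apply functional_extensionality; intros; ring).
    rewrite !lc_coef_lin, !lc_zero_coef, !sum_len by (auto; lra). rewrite xN. unfold Rmin; repeat destruct Rle_dec; lra. }
  rewrite <- E. replace (-1 + lc N c (len xn) y - (-1 + lc N c (len xn) x)) with (lc N c (len xn) y - lc N c (len xn) x) by ring.
  rewrite !lc_sub. apply ssum_le. intros k Hk.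
  apply Rmult_le_compat_r. pose proof (len_mono xn k x y H0); lra. auto. Qed.

Lemma PL_incr_up Cm x y : (forall k, (k<N)%nat -> c k <= Cm) -> -1 <= x -> x <= y -> y <= 1 -> PL xn N c y - PL xn N c x <= Cm * (y - x).
Proof. intros HC. intros. unfold PL.
  assert (E : lc N (fun _ => Cm) (len xn) y - lc N (fun _ => Cm) (len xn) x = Cm * (y - x)).
  { replace (fun _ : nat => Cm) with (fun k : nat => Cm * (fun _ => 1) k + 0 * (fun _ => 0) k) by (apply functional_extensionality; intros; ring).
    rewrite !lc_coef_lin, !lc_zero_coef, !sum_len by (auto; lra). rewrite xN. unfold Rmin; repeat destruct Rle_dec; lra. }
  rewrite <- E. replace (-1 + lc N c (len xn) y - (-1 + lc N c (len xn) x)) with (lc N c (len xn) y - lc N c (len xn) x) by ring.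
  rewrite !lc_sub. apply ssum_le. intros k Hk.
  apply Rmult_le_compat_r. pose proof (len_mono xn k x y H0); lra. auto. Qed.

Lemma PL_m1 : PL xn N c (-1) = -1.
Proof. unfold PL. rewrite lc_zero_fun. ring. intros. apply len_low. rewrite <- x0. apply nodes_mono; lia. Qed.

Lemma PL_1 : PL xn N c 1 = 1.
Proof. unfold PL. rewrite (lc_ext N c c (len xn) (fun k (_:R) => xn (S k) - xn k) 1 1).
  rewrite lc_ssum, csum; ring. auto. intros. apply len_high. left; apply xinc; auto.
  rewrite <- xN. apply nodes_mono; lia. Qed.

Lemma PL_G : inG (PL xn N c).
Proof.
  assert (Hinc : forall s t, in_I s -> in_I t -> s < t -> PL xn N c s < PL xn N c t).
  { intros s t Hs Ht Hst. unfold in_I in *. pose proof (PL_incr s t). assert (0 < mu * (t - s)) by (apply Rmult_lt_0_compat; lra).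
    assert (mu * (t - s) <= PL xn N c t - PL xn N c s) by (apply H; lra). lra. }
  split; [|split; [|split; [|split]]]; auto.
  - intros t Ht. unfold in_I in *. split.
    + destruct (Req_dec t (-1)). subst; rewrite PL_m1; lra. rewrite <- PL_m1. left; apply Hinc; unfold in_I; lra.
    + destruct (Req_dec t 1). subst; rewrite PL_1; lra. rewrite <- PL_1. left; apply Hinc; unfold in_I; lra.
  - apply lip_contI with (sa N c). apply sa_pos. apply PL_lip.
  - apply PL_m1.
  - apply PL_1. Qed.

Lemma PL_piece k x : (k < N)%nat -> xn k <= x <= xn (S k) -> PL xn N c x = PL xn N c (xn k) + c k * (x - xn k).
Proof. intros Hk Hx. unfold PL.
  assert (lc N c (len xn) x - lc N c (len xn) (xn k) = c k * (x - xn k)).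
  { rewrite lc_sub. rewrite <- (ssum_single N k (c k * (x - xn k))) by auto. apply ssum_ext. intros l Hl.
    destruct (Nat.eqb_spec l k).
    - subst. rewrite len_mid by auto. rewrite len_low by lra. ring.
    - destruct (Nat.lt_ge_cases l k).
      + assert (A: xn l <= xn (S l)) by (left; apply xinc; lia).
        assert (B: xn (S l) <= xn k) by (apply nodes_mono; lia).
        rewrite (len_high xn l x A) by lra. rewrite (len_high xn l (xn k) A B). ring.
      + assert (A: xn (S k) <= xn l) by (apply nodes_mono; lia).
        assert (B: xn k <= xn l) by (apply nodes_mono; lia).
        rewrite (len_low xn l x) by lra. rewrite (len_low xn l (xn k) B). ring. }
  lra. Qed.

Lemma RInt_len k : (k < N)%nat -> RInt (len xn k) (-1) 1 = (xn (S k) - xn k) * (1 - (xn k + xn (S k))/2) :> R.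
Proof. intros Hk.
  assert (Ex : forall a b, ex_RInt (len xn k) a b) by (intros; apply lip_ex_RInt with 1; [lra| apply len_lip]).
  rewrite <- (Chasles_R _ (-1) (xn k) 1) by auto. rewrite <- (Chasles_R _ (xn k) (xn (S k)) 1) by auto.
  assert (A1 : RInt (len xn k) (-1) (xn k) = 0 :> R).
  { rewrite (RInt_ext_R _ (fun _ => 0)). { rewrite RInt_const_R; ring. } intros x Hx. apply len_low.
    assert (-1 <= xn k) by (rewrite <- x0; apply nodes_mono; lia). unfold Rmin, Rmax in Hx; destruct Rle_dec; lra. }
  assert (A2 : RInt (len xn k) (xn k) (xn (S k)) = (xn (S k) - xn k) * (xn (S k) - xn k) / 2 :> R).
  { rewrite (RInt_ext_R _ (fun x => 1 * x + - xn k)). { rewrite RInt_affine; field. }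
    intros x Hx. rewrite len_mid. ring. assert (xn k < xn (S k)) by auto. unfold Rmin, Rmax in Hx; destruct Rle_dec; lra. }
  assert (A3 : RInt (len xn k) (xn (S k)) 1 = (1 - xn (S k)) * (xn (S k) - xn k) :> R).
  { rewrite (RInt_ext_R _ (fun _ => xn (S k) - xn k)). { rewrite RInt_const_R; ring. } intros x Hx. apply len_high.
    left; auto. assert (xn (S k) <= 1) by (rewrite <- xN; apply nodes_mono; lia). unfold Rmin, Rmax in Hx; destruct Rle_dec; lra. }
  rewrite A1, A2, A3. field. Qed.

Lemma RInt_PL : RInt (PL xn N c) (-1) 1 = -2 + ssum N (fun k => c k * ((xn (S k) - xn k) * (1 - (xn k + xn (S k))/2))) :> R.
Proof.
  assert (Ex : forall k a b, ex_RInt (len xn k) a b) by (intros; apply lip_ex_RInt with 1; [lra| apply len_lip]).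
  destruct (RInt_ssum N (len xn) c (-1) 1) as [E1 E2]. intros; auto.
  unfold PL. rewrite (RInt_plus_R (fun _ => -1) (fun x => lc N c (len xn) x)); auto. rewrite RInt_const_R, E2. 
  replace ((1 - -1) * -1) with (-2) by ring. f_equal. apply ssum_ext. intros. rewrite RInt_len; auto.
  apply (ex_RInt_const (V:=R_NormedModule)). Qed.

Lemma Q_PL h : contI h -> Q h (PL xn N c) = ssum N (fun k => c k * RInt h (xn k) (xn (S k))).
Proof. intros Hh. assert (HG := PL_G). set (g := PL xn N c). fold g in HG.
  set (y := fun k => g (xn k)).
  assert (Ey : forall k, (k<=N)%nat -> in_I (y k)) by (intros; apply G_I; auto; apply nodes_I; auto).
  destruct (RInt_chain (fun t => h (ginv g t)) y N) as [_ E].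
  { intros k Hk. apply Q_ex; auto; apply Ey; lia. }
  unfold y in E. unfold g in E. rewrite x0, xN, PL_m1, PL_1 in E. unfold Q. fold g in E. rewrite E.
  apply ssum_ext. intros k Hk.
  assert (Hck : 0 < c k) by (pose proof (cpos k Hk); lra).
  assert (Hxk := xinc k Hk).
  assert (Ik : in_I (xn k)) by (apply nodes_I; lia). assert (ISk : in_I (xn (S k))) by (apply nodes_I; lia).
  assert (Py : g (xn (S k)) = g (xn k) + c k * (xn (S k) - xn k)) by (apply PL_piece; auto; lra).
  set (u := / c k). set (v := xn k - g (xn k) / c k).
  assert (Eu1 : u * g (xn k) + v = xn k) by (unfold u, v; field; lra).
  assert (Eu2 : u * g (xn (S k)) + v = xn (S k)) by (unfold u, v; rewrite Py; field; lra).
  rewrite (RInt_ext_R _ (fun t => c k * (u * h (u * t + v)))).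
  - rewrite RInt_scal_R. f_equal. 
    assert (EE := RInt_comp_lin (V:=R_CompleteNormedModule) h u v (g (xn k)) (g (xn (S k)))).
    rewrite Eu1, Eu2 in EE. apply EE. apply contI_ex_RInt; auto.
    assert (EE := ex_RInt_comp_lin (V:=R_NormedModule) h u v (g (xn k)) (g (xn (S k)))).
    rewrite Eu1, Eu2 in EE. apply EE. apply contI_ex_RInt; auto.
  - intros t Ht. assert (g (xn k) < g (xn (S k))) by (rewrite Py; nra).
    rewrite Rmin_left, Rmax_right in Ht by lra.
    set (s := u * t + v).
    assert (Hs : xn k <= s <= xn (S k)).
    { unfold s. rewrite <- Eu1, <- Eu2. unfold u. assert (0 < / c k) by (apply Rinv_0_lt_compat; auto). nra. }
    assert (Is : in_I s) by (unfold in_I in *; lra).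
    assert (Egs : g s = t).
    { unfold g. rewrite (PL_piece k s Hk Hs). fold g. unfold s, u, v. field. lra. }
    rewrite <- Egs. rewrite ginv_f; auto. fold s. unfold u. field. lra. Qed.
End PLsec.

Definition xg (N k : nat) : R := -1 + 2 * INR k / INR N.

Section Grid.
Variable N : nat.
Hypothesis HN : (0 < N)%nat.
Lemma INR_N_pos : 0 < INR N.
Proof. apply lt_0_INR; auto. Qed.
Lemma xg0 : xg N O = -1.
Proof. unfold xg. simpl. pose proof INR_N_pos. field. lra. Qed.
Lemma xgN : xg N N = 1.
Proof. unfold xg. pose proof INR_N_pos. field. lra. Qed.
Lemma xg_step k : xg N (S k) - xg N k = 2 / INR N.
Proof. unfold xg. rewrite S_INR. pose proof INR_N_pos. field. lra. Qed.
Lemma xg_inc k : (k < N)%nat -> xg N k < xg N (S k).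
Proof. intros. pose proof (xg_step k). pose proof INR_N_pos. assert (0 < 2 / INR N) by (apply Rdiv_lt_0_compat; lra). lra. Qed.

Lemma find_cell t : -1 <= t <= 1 -> exists k, (k < N)%nat /\ xg N k <= t <= xg N (S k).
Proof. intros Ht.
  assert (G : forall M, (0 < M)%nat -> (M <= N)%nat -> t <= xg N M -> exists k, (k < M)%nat /\ xg N k <= t <= xg N (S k)).
  { induction M; intros H0 H1 H2. lia.
    destruct (Rle_dec t (xg N M)).
    - destruct (Nat.eq_dec M O). subst. exists O. split. lia. rewrite xg0 in r. split; [rewrite xg0|]; lra.
      destruct (IHM ltac:(lia) ltac:(lia) r) as [k [Hk1 Hk2]]. exists k; split; auto; lia.
    - exists M. split. lia. lra. }
  apply (G N HN (le_n N)). rewrite xgN; lra. Qed.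
End Grid.

Lemma unif_family m (phi : nat -> R -> R) : (forall k, (k<m)%nat -> contI (phi k)) ->
  forall tau, 0 < tau -> exists eta, 0 < eta /\ forall k x y, (k<m)%nat -> in_I x -> in_I y -> Rabs (x - y) < eta -> Rabs (phi k x - phi k y) < tau.
Proof. induction m; intros H tau Ht.
  - exists 1. split. lra. intros; lia.
  - destruct (IHm ltac:(intros; apply H; lia) tau Ht) as [e1 [He1 P1]].
    destruct (contI_unif (phi m) (H m ltac:(lia)) tau Ht) as [e2 [He2 P2]].
    exists (Rmin e1 e2). split. apply Rmin_pos; auto. intros k x y Hk Hx Hy Hxy.
    destruct (Nat.eq_dec k m). subst. apply P2; auto. eapply Rlt_le_trans; [exact Hxy| apply Rmin_r].
    apply P1; auto. lia. eapply Rlt_le_trans; [exact Hxy| apply Rmin_l]. Qed.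

Lemma cell_indep m (phi : nat -> R -> R) K : 0 < K -> (forall k, (k<m)%nat -> contI (phi k)) ->
  (forall k x, (k<m)%nat -> in_I x -> Rabs (phi k x) <= K) -> indep in_I m phi ->
  exists N, (0 < N)%nat /\ indep (fun k => (k < N)%nat) m (fun j k => RInt (phi j) (xg N k) (xg N (S k))).
Proof. intros HK Hc Hb Hi.
  assert (I0 : in_I 0) by (unfold in_I; lra).
  destruct (quant in_I 0 I0 m phi K HK Hb Hi) as [d [Hd Hq]].
  destruct (unif_family m phi Hc (d/2) ltac:(lra)) as [eta [Heta Hu]].
  destruct (archimed_cor1 (eta/2) ltac:(lra)) as [N [HN1 HN2]].
  exists N. split; auto.
  assert (HNr := INR_N_pos N HN2).
  intros c Hc0.
  destruct (Req_dec (sa m c) 0) as [E|E]. apply sa_zero; auto.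
  exfalso. assert (Hs : 0 < sa m c) by (pose proof (sa_pos m c); lra).
  destruct (Hq c) as [t [It Ht]].
  destruct (find_cell N HN2 t It) as [k0 [Hk0 Hc1]].
  assert (Hstep := xg_step N HN2 k0).
  set (a := xg N k0). set (b := xg N (S k0)). fold a b in Hc1.
  assert (Hab : a < b) by (apply xg_inc; auto).
  assert (Ia : in_I a) by (apply (nodes_I (xg N) N (xg0 N HN2) (xgN N HN2) (xg_inc N HN2)); lia).
  assert (Ib : in_I b) by (apply (nodes_I (xg N) N (xg0 N HN2) (xgN N HN2) (xg_inc N HN2)); lia).
  assert (Hw : b - a < eta).
  { unfold a, b. rewrite Hstep. unfold Rdiv. apply Rlt_le_trans with (2 * (eta/2)). apply Rmult_lt_compat_l. lra. exact HN1. lra. }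
  assert (Hcl : forall x, a <= x <= b -> Rabs (lc m c phi x - lc m c phi t) <= sa m c * (d/2)).
  { intros x Hx. apply lc_diff_bound. intros j Hj. left. apply Hu; auto.
    unfold in_I in *; split; lra. apply Rabs_def1; lra. }
  destruct (RInt_ssum m phi c a b) as [Ex Eq].
  { intros j Hj. apply contI_ex_RInt; auto. }
  assert (Z : RInt (fun x => lc m c phi x) a b = 0 :> R).
  { rewrite Eq. rewrite <- (Hc0 k0 Hk0). rewrite <- (lc_ssum m c (fun j => RInt (phi j) a b) k0). apply lc_ext; auto. }
  assert (Hpos : 0 < (b - a) * (sa m c * (d/2))).
  { apply Rmult_lt_0_compat. lra. apply Rmult_lt_0_compat; lra. }
  destruct (Rle_dec 0 (lc m c phi t)) as [P|P].
  - rewrite Rabs_right in Ht by lra.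
    assert ((b - a) * (sa m c * (d/2)) <= RInt (fun x => lc m c phi x) a b).
    { rewrite <- RInt_const_R. apply RInt_le; auto. lra. apply ex_RInt_const.
      intros x Hx. assert (H1 := Hcl x ltac:(lra)). revert H1; rabs. }
    lra.
  - rewrite Rabs_left in Ht by lra.
    assert (RInt (fun x => lc m c phi x) a b <= (b - a) * (- (sa m c * (d/2)))).
    { rewrite <- RInt_const_R. apply RInt_le; auto. lra. apply ex_RInt_const.
      intros x Hx. assert (H1 := Hcl x ltac:(lra)). revert H1; rabs. }
    lra.
Qed.

Lemma ext_n n (f : nat -> R -> R) g : extend n f g n = g.
Proof. unfold extend. rewrite Nat.eqb_refl. auto. Qed.
Lemma ext_ne n (f : nat -> R -> R) g k : k <> n -> extend n f g k = f k.
Proof. intros. unfold extend. destruct (Nat.eqb_spec k n); auto; lia. Qed.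
Lemma lc_extend n c (f : nat -> R -> R) g x : lc (S n) c (extend n f g) x = lc n c f x + c n * g x.
Proof. simpl. rewrite ext_n. f_equal. apply lc_ext; auto. intros; rewrite ext_ne; auto; lia. Qed.

Lemma ssum_split N (c a s : nat -> R) eps : (forall k, (k<N)%nat -> c k = 1 + eps * s k) ->
  ssum N (fun k => c k * a k) = ssum N a + eps * ssum N (fun k => s k * a k).
Proof. intros H. rewrite <- (Rmult_1_l (ssum N a)). rewrite <- ssum_lin. apply ssum_ext. intros; rewrite H; auto; ring. Qed.

Definition Phi3 n (f : nat -> R -> R) : nat -> R -> R := extend (S n) (extend n f idI) (fun _ => 1).

Lemma lc_G1 n c (f : nat -> R -> R) : all_G0 n f -> lc n c f (-1) = - lc n c f 1.
Proof. intros HG. rewrite (lc_ext n c c f (fun _ _ => -1) (-1) (-1)), (lc_ext n c c f (fun _ _ => 1) 1 1); auto.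
  rewrite !lc_ssum. rewrite <- (Rmult_1_l (ssum n (fun k => c k * 1))).
  replace (- (1 * ssum n (fun k => c k * 1))) with (-1 * ssum n (fun k => c k * 1) + 0 * ssum n (fun k => c k * 1)) by ring.
  rewrite <- ssum_lin. apply ssum_ext. intros; ring.
  intros k Hk. apply G_1. apply HG; auto. intros k Hk. apply G_m1. apply HG; auto. Qed.

Lemma Phi3_indep n f : all_G0 n f -> lin_indep_with idI n f -> indep in_I (S (S n)) (Phi3 n f).
Proof. intros HG HL c Hc.
  assert (E : forall t, lc (S (S n)) c (Phi3 n f) t = lc n c f t + c n * t + c (S n)).
  { intros t. unfold Phi3. rewrite lc_extend, lc_extend. unfold idI. ring. }
  assert (A1 := Hc 1 ltac:(unfold in_I; lra)). assert (A2 := Hc (-1) ltac:(unfold in_I; lra)).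
  rewrite E in A1, A2. rewrite lc_G1 in A2; auto.
  assert (C1 : c (S n) = 0) by lra.
  destruct (HL (c n) c) as [C2 C3].
  { intros t Ht. rewrite lincomb_lc. specialize (Hc t Ht). rewrite E, C1 in Hc. unfold idI. lra. }
  intros k Hk. destruct (Nat.eq_dec k (S n)). subst; auto. destruct (Nat.eq_dec k n). subst; auto. apply C3; lia. Qed.

Lemma Phi3_f n f j : (j < n)%nat -> Phi3 n f j = f j.
Proof. intros. unfold Phi3. rewrite ext_ne by lia. rewrite ext_ne by lia. auto. Qed.
Lemma Phi3_n n f : Phi3 n f n = idI.
Proof. unfold Phi3. rewrite ext_ne by lia. apply ext_n. Qed.
Lemma Phi3_Sn n f : Phi3 n f (S n) = fun _ => 1.
Proof. unfold Phi3. apply ext_n. Qed.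

Lemma sign_construct n f (T : nat -> R) : all_G0 n f -> lin_indep_with idI n f ->
  exists g eps, 0 < eps /\ inG0 g /\ (forall j, (j<n)%nat -> Q (f j) g = eps * T j) /\
   (forall x y, -1 <= x -> x <= y -> y <= 1 -> g y - g x <= 2 * (y - x)).
Proof.
  intros HG HL. set (Phi := Phi3 n f).
  assert (Hc : forall k, (k < S (S n))%nat -> contI (Phi k)).
  { intros k Hk. unfold Phi. destruct (Nat.eq_dec k (S n)). subst; rewrite Phi3_Sn; apply contI_const.
    destruct (Nat.eq_dec k n). subst; rewrite Phi3_n; apply contI_id. rewrite Phi3_f by lia. apply contI_G, HG; lia. }
  assert (Hb : forall k x, (k < S (S n))%nat -> in_I x -> Rabs (Phi k x) <= 1).
  { intros k x Hk Hx. unfold Phi. destruct (Nat.eq_dec k (S n)). subst; rewrite Phi3_Sn; rewrite Rabs_R1; lra.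
    destruct (Nat.eq_dec k n). subst; rewrite Phi3_n; unfold idI, in_I in *; apply Rabs_le; lra.
    rewrite Phi3_f by lia. assert (in_I (f k x)) by (apply G_I; auto; apply HG; lia). unfold in_I in *; apply Rabs_le; lra. }
  destruct (cell_indep (S (S n)) Phi 1 ltac:(lra) Hc Hb (Phi3_indep n f HG HL)) as [N [HN Hi]].
  set (r := (fun j k => RInt (Phi j) (xg N k) (xg N (S k))) : nat -> nat -> R).
  set (y := fun j => if Nat.ltb j n then T j else 0).
  destruct (solver N (S (S n)) r Hi y) as [s Hs].
  set (eps := / (2 * (1 + sa N s))).
  assert (Hsa := sa_pos N s).
  assert (Heps : 0 < eps) by (unfold eps; apply Rinv_0_lt_compat; lra).
  assert (Heps2 : eps * sa N s <= 1/2).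
  { unfold eps. apply (Rmult_le_reg_r (2 * (1 + sa N s))). lra.
    replace (/ (2 * (1 + sa N s)) * sa N s * (2 * (1 + sa N s))) with (sa N s) by (field; lra). lra. }
  set (c := fun k => 1 + eps * s k).
  assert (Hck : forall k, (k < N)%nat -> 1/2 <= c k <= 3/2).
  { intros k Hk. unfold c. assert (Rabs (s k) <= sa N s) by (apply sa_ge; auto).
    assert (Rabs (eps * s k) <= 1/2). { rewrite Rabs_mult, (Rabs_right eps) by lra.
      apply Rle_trans with (eps * sa N s); auto. apply Rmult_le_compat_l; lra. }
    revert H0; rabs. }
  assert (X0 := xg0 N HN). assert (XN := xgN N HN). assert (Xinc := xg_inc N HN).
  assert (Hr1 : forall k, r (S n) k = xg N (S k) - xg N k).
  { intros k. unfold r, Phi. rewrite Phi3_Sn. rewrite RInt_const_R. ring. }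
  assert (Hr2 : forall k, r n k = (xg N (S k) * xg N (S k) - xg N k * xg N k) / 2).
  { intros k. unfold r, Phi. rewrite Phi3_n. rewrite (RInt_ext_R _ (fun x => 1 * x + 0)).
    rewrite RInt_affine. field. intros; unfold idI; ring. }
  assert (S1 : ssum N (fun k => s k * (xg N (S k) - xg N k)) = 0).
  { assert (H := Hs (S n) ltac:(lia)). unfold y in H. destruct (Nat.ltb_spec (S n) n); try lia.
    rewrite rdot_ssum in H. rewrite <- H. apply ssum_ext. intros; rewrite Hr1; ring. }
  assert (S2 : ssum N (fun k => s k * ((xg N (S k) * xg N (S k) - xg N k * xg N k) / 2)) = 0).
  { assert (H := Hs n ltac:(lia)). unfold y in H. destruct (Nat.ltb_spec n n); try lia.
    rewrite rdot_ssum in H. rewrite <- H. apply ssum_ext. intros; rewrite Hr2; ring. }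
  assert (Csum : ssum N (fun k => c k * (xg N (S k) - xg N k)) = 2).
  { rewrite (ssum_split N c _ s eps) by auto. rewrite S1.
    rewrite (ssum_tele N (xg N)). rewrite XN, X0. ring. }
  assert (Hcpos : forall k, (k<N)%nat -> 1/2 <= c k) by (intros; apply Hck; auto).
  set (g := PL (xg N) N c).
  assert (HGg : inG g) by (apply (PL_G (xg N) N X0 XN Xinc c (1/2) ltac:(lra) Hcpos Csum)).
  exists g, eps. split; auto. split; [split|split].
  - auto.
  - change (RInt g (-1) 1 = 0 :> R). unfold g. rewrite RInt_PL; auto.
    rewrite (ssum_split N c _ s eps) by auto.
    rewrite (ssum_ext N (fun k => s k * ((xg N (S k) - xg N k) * (1 - (xg N k + xg N (S k)) / 2)))
       (fun k => 1 * (s k * (xg N (S k) - xg N k)) + (-1) * (s k * ((xg N (S k) * xg N (S k) - xg N k * xg N k) / 2))))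
       by (intros; field).
    rewrite ssum_lin, S1, S2.
    pose (F := fun k => xg N k - xg N k * xg N k / 2).
    rewrite (ssum_ext N _ (fun k => F (S k) - F k)).
    rewrite ssum_tele. unfold F. rewrite XN, X0. field.
    intros. unfold F. field.
  - intros j Hj. unfold g. rewrite (Q_PL (xg N) N X0 XN Xinc c (1/2) ltac:(lra) Hcpos Csum).
    2: { apply contI_G, HG; auto. }
    rewrite (ssum_split N c _ s eps) by auto.
    destruct (RInt_chain (f j) (xg N) N) as [_ E].
    { intros k Hk. apply contI_ex_RInt. apply contI_G, HG; auto.
      apply (nodes_I (xg N) N X0 XN Xinc); lia. apply (nodes_I (xg N) N X0 XN Xinc); lia. }
    rewrite <- E, X0, XN. destruct (HG j Hj) as [_ Z]. rewrite Z.
    assert (H := Hs j ltac:(lia)). unfold y in H. destruct (Nat.ltb_spec j n); try lia.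
    rewrite rdot_ssum in H. rewrite <- H.
    replace (ssum N (fun k => s k * RInt (f j) (xg N k) (xg N (S k)))) with (ssum N (fun k => r j k * s k)).
    ring. apply ssum_ext. intros k Hk. unfold r, Phi. rewrite Phi3_f by auto. ring.
  - intros x y0 H1 H2 H3. unfold g.
    assert (PL (xg N) N c y0 - PL (xg N) N c x <= 3/2 * (y0 - x)).
    { apply (PL_incr_up (xg N) N X0 XN Xinc c (3/2)); auto. intros; apply Hck; auto. }
    lra.
Qed.

Lemma lwi_indep m F : lin_indep_with idI m F -> indep in_I (S m) (extend m F idI).
Proof. intros HL c Hc. destruct (HL (c m) c) as [A B].
  { intros t Ht. rewrite lincomb_lc. specialize (Hc t Ht). rewrite lc_extend in Hc. unfold idI in *. lra. }
  intros k Hk. destruct (Nat.eq_dec k m). subst; auto. apply B; lia. Qed.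

Lemma indep_lwi m F : indep in_I (S m) (extend m F idI) -> lin_indep_with idI m F.
Proof. intros H c0 c Hc.
  set (c' := fun k => if Nat.eqb k m then c0 else c k).
  assert (E : forall t, in_I t -> lc (S m) c' (extend m F idI) t = 0).
  { intros t Ht. rewrite lc_extend. specialize (Hc t Ht). rewrite lincomb_lc in Hc.
    unfold c'. rewrite Nat.eqb_refl. rewrite (lc_ext m _ c F F t t). unfold idI in *. lra.
    intros k Hk. destruct (Nat.eqb_spec k m); auto; lia. auto. }
  split. assert (H1 := H c' E m ltac:(lia)). unfold c' in H1. rewrite Nat.eqb_refl in H1. auto.
  intros k Hk. assert (H1 := H c' E k ltac:(lia)). unfold c' in H1. destruct (Nat.eqb_spec k m); auto; lia. Qed.

Lemma li_indep m F : lin_indep m F -> indep in_I m F.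
Proof. intros H c Hc. apply H. intros t Ht. rewrite lincomb_lc; auto. Qed.
Lemma indep_li m F : indep in_I m F -> lin_indep m F.
Proof. intros H c Hc. apply H. intros t Ht. rewrite <- lincomb_lc; auto. Qed.

Lemma indep_stable m (F F' : nat -> R -> R) d : 0 < d ->
  (forall c, exists x, in_I x /\ d * sa m c <= Rabs (lc m c F x)) ->
  (forall t, in_I t -> exists B, B < d /\ forall k, (k<m)%nat -> Rabs (F k t - F' k t) <= B) ->
  indep in_I m F'.
Proof. intros Hd Hq Hp c Hc.
  destruct (Req_dec (sa m c) 0) as [E|E]. apply sa_zero; auto.
  exfalso. assert (Hs : 0 < sa m c) by (pose proof (sa_pos m c); lra).
  destruct (Hq c) as [t [It Ht]]. destruct (Hp t It) as [B [HB HkB]].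
  assert (D := lc_diff_bound m c F F' t t B HkB). rewrite (Hc t It), Rminus_0_r in D.
  assert (sa m c * B < sa m c * d) by (apply Rmult_lt_compat_l; auto). lra. Qed.

Lemma fe_bound h t : inG h -> in_I t -> Rabs (fe h t) <= 1.
Proof. intros Hh Ht. unfold fe. pose proof (G_I h Hh t Ht). pose proof (G_I h Hh (-t) (in_I_opp t Ht)).
  unfold in_I in *. apply Rabs_le; split; lra. Qed.

Lemma G_bound h t : inG h -> in_I t -> Rabs (h t) <= 1.
Proof. intros Hh Ht. pose proof (G_I h Hh t Ht). unfold in_I in *. apply Rabs_le; lra. Qed.

Section Fixed.
Variable n : nat.
Variable f : nat -> R -> R.
Hypothesis HG : all_G0 n f.

Lemma fG j : (j < n)%nat -> inG (f j).
Proof. intros; apply HG; auto. Qed.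

Lemma ext_G g k : inG g -> (k < S n)%nat -> inG (extend n f g k).
Proof. intros Hg Hk. destruct (Nat.eq_dec k n). subst; rewrite ext_n; auto. rewrite ext_ne; auto. apply fG; lia. Qed.

Lemma indepV_stable g : inG g -> lin_indep_with idI (S n) (extend n f g) ->
  exists e, 0 < e /\ forall g', inG g' -> sup_close g g' e -> lin_indep_with idI (S n) (extend n f g').
Proof. intros Hg HL. apply lwi_indep in HL.
  assert (I0 : in_I 0) by (unfold in_I; lra).
  assert (Hb : forall k x, (k < S (S n))%nat -> in_I x -> Rabs (extend (S n) (extend n f g) idI k x) <= 1).
  { intros k x Hk Hx. destruct (Nat.eq_dec k (S n)). subst; rewrite ext_n. unfold idI; apply Rabs_le; unfold in_I in *; lra.
    rewrite ext_ne by auto. apply G_bound; auto. apply ext_G; auto; lia. }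
  destruct (quant in_I 0 I0 (S (S n)) _ 1 ltac:(lra) Hb HL) as [d [Hd Hq]].
  exists d. split; auto. intros g' Hg' Hc. apply indep_lwi. apply (indep_stable _ _ _ d Hd Hq).
  intros t Ht. exists (Rabs (g' t - g t)). split. apply Hc; auto.
  intros k Hk. unfold extend. destruct (Nat.eqb_spec k (S n)). rewrite Rminus_diag, Rabs_R0; apply Rabs_pos.
  destruct (Nat.eqb_spec k n). rewrite Rabs_minus_sym; lra. rewrite Rminus_diag, Rabs_R0; apply Rabs_pos. Qed.

Lemma fe_ext g : forall k, fe (extend n f g k) = extend n (fun k => fe (f k)) (fe g) k.
Proof. intros k. destruct (Nat.eq_dec k n). subst; rewrite !ext_n; auto. rewrite !ext_ne; auto. Qed.

Lemma indepVe_stable g : inG g -> lin_indep (S n) (fun k => fe (extend n f g k)) ->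
  exists e, 0 < e /\ forall g', inG g' -> sup_close g g' e -> lin_indep (S n) (fun k => fe (extend n f g' k)).
Proof. intros Hg HL. apply li_indep in HL.
  assert (I0 : in_I 0) by (unfold in_I; lra).
  assert (Hb : forall k x, (k < S n)%nat -> in_I x -> Rabs (fe (extend n f g k) x) <= 1).
  { intros k x Hk Hx. apply fe_bound; auto. apply ext_G; auto. }
  destruct (quant in_I 0 I0 (S n) _ 1 ltac:(lra) Hb HL) as [d [Hd Hq]].
  exists d. split; auto. intros g' Hg' Hc. apply indep_li. apply (indep_stable _ _ _ d Hd Hq).
  intros t Ht. exists (Rmax (Rabs (g' t - g t)) (Rabs (g' (-t) - g (-t)))). split.
  { unfold Rmax; destruct Rle_dec. apply Hc; apply in_I_opp; auto. apply Hc; auto. }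
  intros k Hk. destruct (Nat.eq_dec k n).
  - subst; rewrite !ext_n. unfold fe.
    assert (Rabs (g t - g' t) <= Rmax (Rabs (g' t - g t)) (Rabs (g' (- t) - g (- t)))).
    { rewrite <- Rabs_Ropp. replace (- (g t - g' t)) with (g' t - g t) by ring. apply Rmax_l. }
    assert (Rabs (g (-t) - g' (-t)) <= Rmax (Rabs (g' t - g t)) (Rabs (g' (- t) - g (- t)))).
    { rewrite <- Rabs_Ropp. replace (- (g (-t) - g' (-t))) with (g' (-t) - g (-t)) by ring. apply Rmax_r. }
    replace ((g t + g (- t)) / 2 - (g' t + g' (- t)) / 2) with ((g t - g' t)/2 + (g (-t) - g' (-t))/2) by field.
    eapply Rle_trans. apply Rabs_triang. unfold Rdiv. rewrite !Rabs_mult, Rabs_inv, (Rabs_right 2) by lra. lra.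
  - rewrite !ext_ne by auto. rewrite Rminus_diag, Rabs_R0. 
    unfold Rmax; destruct Rle_dec; apply Rabs_pos. Qed.

Lemma min_pos (a : nat -> R) m : (forall j, (j<m)%nat -> 0 < a j) -> exists e, 0 < e /\ forall j, (j<m)%nat -> e <= a j.
Proof. induction m; intros H. exists 1; split; [lra| intros; lia].
  destruct IHm as [e [He P]]. intros; apply H; lia.
  exists (Rmin e (a m)). split. apply Rmin_pos; auto; apply H; lia.
  intros j Hj. destruct (Nat.eq_dec j m). subst; apply Rmin_r. eapply Rle_trans. apply Rmin_l. apply P; lia. Qed.

Lemma Qsign_stable g : inG g -> (forall j, (j<n)%nat -> Q g (f j) <> 0) ->
  exists e, 0 < e /\ forall g', inG g' -> sup_close g g' e -> forall j, (j<n)%nat -> 0 < Q g' (f j) * Q g (f j).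
Proof. intros Hg Hnz. destruct (min_pos (fun j => Rabs (Q g (f j))) n) as [e [He P]].
  { intros j Hj. apply Rabs_pos_lt; auto. }
  exists (e/4). split. lra. intros g' Hg' Hc j Hj.
  assert (D : Rabs (Q g' (f j) - Q g (f j)) <= 2 * (e/4)).
  { apply Q_diff_bound; try apply contI_G; auto. apply fG; auto. intros t Ht. left. 
    rewrite <- Rabs_Ropp. replace (- (g' t - g t)) with (g t - g' t) by ring. 
    replace (g t - g' t) with (- (g' t - g t)) by ring. rewrite Rabs_Ropp. apply Hc; auto. }
  specialize (P j Hj). simpl in P. revert D P. rabs; nra. Qed.

Lemma Qnz_ext g : Q_nonzero n f -> inG g -> (forall j, (j<n)%nat -> Q g (f j) <> 0) -> Q_nonzero (S n) (extend n f g).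
Proof. intros H Hg Hq i j Hi Hj Hij.
  destruct (Nat.eq_dec i n); destruct (Nat.eq_dec j n); try lia.
  - subst. rewrite ext_n, ext_ne by auto. apply Hq; lia.
  - subst. rewrite ext_n, ext_ne by auto. rewrite Q_opp; auto. intro C. apply (Hq i). lia. lra. apply fG; lia.
  - rewrite !ext_ne by auto. apply H; lia. Qed.

Lemma G0_ext g : inG0 g -> all_G0 (S n) (extend n f g).
Proof. intros Hg k Hk. destruct (Nat.eq_dec k n). subst; rewrite ext_n; auto. rewrite ext_ne; auto. apply HG; lia. Qed.

Lemma Rdig_transfer g g' : inG g -> inG g' -> (forall j, (j<n)%nat -> 0 < Q g' (f j) * Q g (f j)) ->
  same_rel (Rdig (S n) (extend n f g')) (Rdig (S n) (extend n f g)).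
Proof. intros Hg Hg' Hs i j. unfold Rdig.
  destruct (Nat.eq_dec i n); destruct (Nat.eq_dec j n).
  - subst. rewrite !ext_n. rewrite !Q_self; auto. tauto.
  - subst. rewrite !ext_n. destruct (Nat.lt_ge_cases j (S n)).
    + rewrite !ext_ne by auto. assert (Hj : (j < n)%nat) by lia. specialize (Hs j Hj).
      rewrite (Q_opp g' (f j)), (Q_opp g (f j)) by (auto; apply fG; auto).
      split; intros [A [B C]]; repeat split; auto; nra.
    + split; intros [A [B C]]; lia.
  - subst. rewrite !ext_n. destruct (Nat.lt_ge_cases i (S n)).
    + rewrite !ext_ne by auto. assert (Hi : (i < n)%nat) by lia. specialize (Hs i Hi).
      split; intros [A [B C]]; repeat split; auto; nra.
    + split; intros [A [B C]]; lia.
  - rewrite !ext_ne by auto. tauto. Qed.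

Lemma same_rel_trans (A B C : nat -> nat -> Prop) : same_rel A B -> same_rel B C -> same_rel A C.
Proof. intros H1 H2 i j. specialize (H1 i j). specialize (H2 i j). tauto. Qed.

Lemma same_rel_build g (Rel : nat -> nat -> Prop) : inG g -> tournament (S n) Rel -> restricts_to n Rel f ->
  (forall j, (j<n)%nat -> Rel j n -> Q g (f j) > 0) -> (forall j, (j<n)%nat -> Rel n j -> Q (f j) g > 0) ->
  same_rel (Rdig (S n) (extend n f g)) Rel.
Proof. intros Hg [T1 [T2 T3]] HR H1 H2 i j. unfold Rdig.
  destruct (Nat.eq_dec i n); destruct (Nat.eq_dec j n).
  - subst. rewrite ext_n, Q_self by auto. split. intros [_ [_ C]]; lra. intro C; exfalso; apply (T2 n); auto.
  - subst. rewrite ext_n. split.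
    + intros [A [B C]]. rewrite ext_ne in C by auto. assert (Hj : (j<n)%nat) by lia.
      destruct (T3 n j ltac:(lia) ltac:(lia) ltac:(lia)) as [[E|E] _]; auto.
      specialize (H1 j Hj E). rewrite Q_opp in H1; auto. lra. apply fG; auto.
    + intros E. destruct (T1 _ _ E) as [A B]. repeat split; auto. rewrite ext_ne by auto. apply H2; auto. lia.
  - subst. rewrite ext_n. split.
    + intros [A [B C]]. rewrite ext_ne in C by auto. assert (Hi : (i<n)%nat) by lia.
      destruct (T3 i n ltac:(lia) ltac:(lia) ltac:(lia)) as [[E|E] _]; auto.
      specialize (H2 i Hi E). rewrite Q_opp in H2; auto. lra. apply fG; auto.
    + intros E. destruct (T1 _ _ E) as [A B]. repeat split; auto. rewrite ext_ne by auto. apply H1; auto. lia.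
  - split.
    + intros [A [B C]]. rewrite !ext_ne in C by auto. apply HR. lia. lia. unfold Rdig. repeat split; auto; lia.
    + intros E. destruct (T1 _ _ E) as [A B]. assert (Hi : (i<n)%nat) by lia. assert (Hj : (j<n)%nat) by lia.
      apply HR in E; auto. destruct E as [_ [_ C]]. repeat split; auto. rewrite !ext_ne by auto. auto. Qed.

End Fixed.

Definition inV n f (g : R -> R) := exists c, forall t, in_I t -> g t = lc (S n) c (extend n f idI) t.
Definition inVe n (f : nat -> R -> R) (g : R -> R) := exists c, forall t, in_I t -> fe g t = lc n c (fun k => fe (f k)) t.

Lemma lc_scale {X} m a c (phi : nat -> X -> R) x : lc m (fun k => a * c k) phi x = a * lc m c phi x.
Proof. induction m; simpl. ring. rewrite IHm; ring. Qed.

Lemma lc_extend_fe n c (f : nat -> R -> R) g t :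
  lc (S n) c (fun k => fe (extend n f g k)) t = lc n c (fun k => fe (f k)) t + c n * fe g t.
Proof. rewrite <- lc_extend. apply lc_ext; auto. intros. rewrite fe_ext; auto. Qed.

Section V.
Variable n : nat.
Variable f : nat -> R -> R.

Lemma lin_of_notV g : lin_indep_with idI n f -> ~ inV n f g -> lin_indep_with idI (S n) (extend n f g).
Proof. intros HL HV c0 c Hc.
  assert (E : forall t, in_I t -> c0 * t + lc n c f t + c n * g t = 0).
  { intros t Ht. specialize (Hc t Ht). rewrite lincomb_lc, lc_extend in Hc. unfold idI in Hc. lra. }
  destruct (Req_dec (c n) 0) as [Z|Z].
  - destruct (HL c0 c) as [A B]. { intros t Ht. rewrite lincomb_lc. specialize (E t Ht). unfold idI. rewrite Z in E. lra. }
    split; auto. intros k Hk. destruct (Nat.eq_dec k n). subst; auto. apply B; lia.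
  - exfalso. apply HV. exists (fun k => (- / c n) * (if Nat.eqb k n then c0 else c k)).
    intros t Ht. rewrite lc_extend. rewrite lc_scale. rewrite Nat.eqb_refl.
    rewrite (lc_ext n (fun k => if Nat.eqb k n then c0 else c k) c f f t t).
    specialize (E t Ht). unfold idI. field_simplify; auto. 
    apply (Rmult_eq_reg_l (c n)); auto. field_simplify; auto. lra.
    intros k Hk. destruct (Nat.eqb_spec k n); auto; lia. auto. Qed.

Lemma notV_of_lin g : lin_indep_with idI (S n) (extend n f g) -> ~ inV n f g.
Proof. intros HL [c Hc].
  destruct (HL (- c n) (fun k => if Nat.eqb k n then 1 else - c k)) as [_ B].
  { intros t Ht. rewrite lincomb_lc, lc_extend. rewrite Nat.eqb_refl.
    rewrite (lc_ext n _ (fun k => -1 * c k) f f t t). rewrite lc_scale.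
    specialize (Hc t Ht). rewrite lc_extend in Hc. unfold idI in *. lra.
    intros k Hk. cbv beta. destruct (Nat.eqb_spec k n); try lia; ring. auto. }
  specialize (B n ltac:(lia)). rewrite Nat.eqb_refl in B. lra. Qed.

Lemma lin_of_notVe g : lin_indep n (fun k => fe (f k)) -> ~ inVe n f g -> lin_indep (S n) (fun k => fe (extend n f g k)).
Proof. intros HL HV c Hc.
  assert (E : forall t, in_I t -> lc n c (fun k => fe (f k)) t + c n * fe g t = 0).
  { intros t Ht. specialize (Hc t Ht). rewrite lincomb_lc, lc_extend_fe in Hc. auto. }
  destruct (Req_dec (c n) 0) as [Z|Z].
  - intros k Hk. destruct (Nat.eq_dec k n). subst; auto. apply HL; [|lia].
    intros t Ht. rewrite lincomb_lc. specialize (E t Ht). rewrite Z in E. lra.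
  - exfalso. apply HV. exists (fun k => (- / c n) * c k).
    intros t Ht. rewrite lc_scale. specialize (E t Ht).
    apply (Rmult_eq_reg_l (c n)); auto. field_simplify; auto. lra. Qed.

Lemma notVe_of_lin g : lin_indep (S n) (fun k => fe (extend n f g k)) -> ~ inVe n f g.
Proof. intros HL [c Hc].
  assert (B := HL (fun k => if Nat.eqb k n then 1 else - c k)).
  assert (Z : (if Nat.eqb n n then 1 else - c n) = 0).
  { apply B; [|lia]. intros t Ht. rewrite lincomb_lc, lc_extend_fe. rewrite Nat.eqb_refl.
    rewrite (lc_ext n _ (fun k => -1 * c k) _ (fun k => fe (f k)) t t). rewrite lc_scale.
    specialize (Hc t Ht). lra.
    intros k Hk. cbv beta. destruct (Nat.eqb_spec k n); try lia; ring. auto. }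
  rewrite Nat.eqb_refl in Z. lra. Qed.

Lemma inV_comb a b u w : inV n f u -> inV n f w -> inV n f (fun t => a * u t + b * w t).
Proof. intros [c1 H1] [c2 H2]. exists (fun k => a * c1 k + b * c2 k). intros t Ht.
  rewrite lc_coef_lin, <- (H1 t Ht), <- (H2 t Ht). auto. Qed.

Lemma inVe_comb a b u w : inVe n f u -> inVe n f w -> inVe n f (fun t => a * u t + b * w t).
Proof. intros [c1 H1] [c2 H2]. exists (fun k => a * c1 k + b * c2 k). intros t Ht.
  rewrite lc_coef_lin, <- (H1 t Ht), <- (H2 t Ht). unfold fe. field. Qed.

Hypothesis HG : all_G0 n f.

Lemma steepV : lin_indep_with idI n f -> forall s, 0 < s -> exists eta, 0 < eta /\
  forall g, inG g -> forall x y, in_I x -> in_I y -> Rabs (y - x) < eta -> g y - g x >= s/2 -> ~ inV n f g.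
Proof. intros HL s Hs. assert (Hi := lwi_indep n f HL).
  set (Phi := extend n f idI).
  assert (Hb : forall k x, (k < S n)%nat -> in_I x -> Rabs (Phi k x) <= 1).
  { intros k x Hk Hx. unfold Phi. destruct (Nat.eq_dec k n). subst; rewrite ext_n. unfold idI, in_I in *; apply Rabs_le; lra.
    rewrite ext_ne by auto. apply G_bound; auto. apply HG; lia. }
  assert (Hc : forall k, (k < S n)%nat -> contI (Phi k)).
  { intros k Hk. unfold Phi. destruct (Nat.eq_dec k n). subst; rewrite ext_n. apply contI_id.
    rewrite ext_ne by auto. apply contI_G. apply HG; lia. }
  assert (I0 : in_I 0) by (unfold in_I; lra).
  destruct (quant in_I 0 I0 (S n) Phi 1 ltac:(lra) Hb Hi) as [d [Hd Hq]].
  destruct (unif_family (S n) Phi Hc (d * s / 4)) as [eta [Heta Hu]].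
  { apply Rmult_lt_0_compat; [apply Rmult_lt_0_compat|]; lra. }
  exists eta. split; auto. intros g Hg x y Hx Hy Hxy Hst [c Hcv].
  destruct (Hq c) as [t0 [It0 Ht0]]. rewrite <- Hcv in Ht0 by auto.
  assert (B1 : Rabs (g t0) <= 1) by (apply G_bound; auto).
  assert (D : Rabs (lc (S n) c Phi y - lc (S n) c Phi x) <= sa (S n) c * (d * s / 4)).
  { apply lc_diff_bound. intros k Hk. left. apply Hu; auto. }
  unfold Phi in D. rewrite <- !Hcv in D by auto.
  assert (sa (S n) c * (d * s / 4) <= s / 4).
  { replace (sa (S n) c * (d * s / 4)) with ((d * sa (S n) c) * (s/4)) by field.
    replace (s/4) with (1 * (s/4)) at 2 by field. apply Rmult_le_compat_r; lra. }
  revert D; rabs. Qed.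

Lemma steepVe : lin_indep n (fun k => fe (f k)) -> forall s, 0 < s -> exists eta, 0 < eta /\
  forall g, inG g -> forall x y, in_I x -> in_I y -> Rabs (y - x) < eta -> fe g y - fe g x >= s/16 -> ~ inVe n f g.
Proof. intros HL s Hs. assert (Hi := li_indep n _ HL).
  set (Phi := fun k => fe (f k)).
  assert (Hb : forall k x, (k < n)%nat -> in_I x -> Rabs (Phi k x) <= 1).
  { intros k x Hk Hx. apply fe_bound; auto. apply HG; auto. }
  assert (Hc : forall k, (k < n)%nat -> contI (Phi k)).
  { intros k Hk. apply contI_fe, contI_G, HG; auto. }
  assert (I0 : in_I 0) by (unfold in_I; lra).
  destruct (quant in_I 0 I0 n Phi 1 ltac:(lra) Hb Hi) as [d [Hd Hq]].
  destruct (unif_family n Phi Hc (d * s / 32)) as [eta [Heta Hu]].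
  { apply Rmult_lt_0_compat; [apply Rmult_lt_0_compat|]; lra. }
  exists eta. split; auto. intros g Hg x y Hx Hy Hxy Hst [c Hcv].
  destruct (Hq c) as [t0 [It0 Ht0]]. rewrite <- Hcv in Ht0 by auto.
  assert (B1 : Rabs (fe g t0) <= 1) by (apply fe_bound; auto).
  assert (D : Rabs (lc n c Phi y - lc n c Phi x) <= sa n c * (d * s / 32)).
  { apply lc_diff_bound. intros k Hk. left. apply Hu; auto. }
  unfold Phi in D. rewrite <- !Hcv in D by auto.
  assert (sa n c * (d * s / 32) <= s / 32).
  { replace (sa n c * (d * s / 32)) with ((d * sa n c) * (s/32)) by field.
    replace (s/32) with (1 * (s/32)) at 2 by field. apply Rmult_le_compat_r; lra. }
  revert D; rabs. Qed.
End V.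

Definition wA (eta : R) := (11/8 - eta/4) / (1 + eta/2).
Definition wn (eta : R) (k : nat) : R := match k with O => -1 | 1 => 1/2 - eta | 2 => 1/2 | _ => 1 end.
Definition wc (eta : R) (k : nat) : R := match k with O => wA eta / (3/2 - eta) | 1 => 1 / (2 * eta) | _ => 2 * (3/2 - wA eta) end.

Lemma w_steep eta : 0 < eta <= 1/5 -> exists w, inG0 w /\ w (1/2) - w (1/2 - eta) = 1/2 /\ w (-1/2 + eta) - w (-1/2) <= 1/4.
Proof. intros He.
  assert (HA1 : 0 < wA eta) by (unfold wA; apply Rdiv_lt_0_compat; lra).
  assert (HA2 : wA eta <= 11/8).
  { unfold wA. apply (Rmult_le_reg_r (1 + eta/2)). lra. field_simplify; lra. }
  assert (HA3 : wA eta < 3/2).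
  { unfold wA. apply (Rmult_lt_reg_r (1 + eta/2)). lra. field_simplify; lra. }
  assert (C0 : 0 < wc eta 0) by (simpl; apply Rdiv_lt_0_compat; lra).
  assert (C1 : 0 < wc eta 1) by (simpl; apply Rdiv_lt_0_compat; lra).
  assert (C2 : 0 < wc eta 2) by (simpl; lra).
  set (mu := Rmin (wc eta 0) (Rmin (wc eta 1) (wc eta 2))).
  assert (Hmu : 0 < mu) by (unfold mu; repeat apply Rmin_pos; auto).
  assert (Hc : forall k, (k < 3)%nat -> mu <= wc eta k).
  { intros k Hk. unfold mu. destruct k as [|[|[|k]]]; try lia.
    apply Rmin_l. eapply Rle_trans; [apply Rmin_r| apply Rmin_l]. eapply Rle_trans; [apply Rmin_r| apply Rmin_r]. }
  assert (X0 : wn eta 0 = -1) by reflexivity. assert (XN : wn eta 3 = 1) by reflexivity.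
  assert (Xinc : forall k, (k < 3)%nat -> wn eta k < wn eta (S k)).
  { intros k Hk. destruct k as [|[|[|k]]]; try lia; simpl; lra. }
  assert (Cs : ssum 3 (fun k => wc eta k * (wn eta (S k) - wn eta k)) = 2).
  { simpl. unfold wA. field. lra. }
  set (w := PL (wn eta) 3 (wc eta)).
  assert (Hw : inG w) by (apply (PL_G (wn eta) 3 X0 XN Xinc (wc eta) mu Hmu Hc Cs)).
  exists w. split; [split|split]; auto.
  - change (RInt w (-1) 1 = 0 :> R). unfold w. rewrite (RInt_PL (wn eta) 3 X0 XN Xinc). simpl. unfold wA. field. lra.
  - unfold w. rewrite (PL_piece (wn eta) 3 Xinc (wc eta) 1 (1/2)) by (try lia; simpl; split; lra). simpl. field. lra.
  - unfold w. rewrite (PL_piece (wn eta) 3 Xinc (wc eta) 0 (-1/2 + eta)) by (try lia; simpl; split; lra).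
    rewrite (PL_piece (wn eta) 3 Xinc (wc eta) 0 (-1/2)) by (try lia; simpl; split; lra). simpl.
    replace (PL (wn eta) 3 (wc eta) (-1) + wA eta / (3 / 2 - eta) * (-1 / 2 + eta - -1) -
      (PL (wn eta) 3 (wc eta) (-1) + wA eta / (3 / 2 - eta) * (-1 / 2 - -1))) with (wA eta * eta / (3/2 - eta)) by (field; lra).
    apply (Rmult_le_reg_r (3/2 - eta)). lra. field_simplify; try lra. nra. Qed.

Lemma RInt_comb_G0 u w a b : inG0 u -> inG0 w -> RInt (fun t => a * u t + b * w t) (-1) 1 = 0 :> R.
Proof. intros [Hu Iu] [Hw Iw].
  assert (Im1 : in_I (-1)) by (unfold in_I; lra). assert (I1 : in_I 1) by (unfold in_I; lra).
  assert (E1 := G_ex_RInt u _ _ Hu Im1 I1). assert (E2 := G_ex_RInt w _ _ Hw Im1 I1).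
  rewrite (RInt_plus_R (fun t => a * u t) (fun t => b * w t)).
  2: apply ex_RInt_scal_R; auto. 2: apply ex_RInt_scal_R; auto.
  rewrite (RInt_scal_R u), (RInt_scal_R w) by auto.
  change (RInt u (-1) 1 = 0 :> R) in Iu. change (RInt w (-1) 1 = 0 :> R) in Iw.
  rewrite Iu, Iw. ring. Qed.

Lemma sign_arith s eps q : 0 < s -> s <= 1/2 -> s <= eps/8 -> Rabs q <= 2 ->
  - (1 - s) * (eps * 1) + s * q < 0 /\ - (1 - s) * (eps * -1) + s * q > 0.
Proof. intros H1 H2 H3 H4.
  assert (B2 : s * q <= s * 2) by (apply Rmult_le_compat_l; [lra| revert H4; rabs]).
  assert (B2' : s * (-2) <= s * q) by (apply Rmult_le_compat_l; [lra| revert H4; rabs]).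
  assert (B3 : s * eps <= 1/2 * eps) by (apply Rmult_le_compat_r; lra).
  split; lra. Qed.

Lemma construct n f Rel : GEN n f -> tournament (S n) Rel -> restricts_to n Rel f ->
  exists g, inG0 g /\ GEN (S n) (extend n f g) /\ same_rel (Rdig (S n) (extend n f g)) Rel /\
    (GENp n f -> GENp (S n) (extend n f g)).
Proof.
  intros [HG [HL HQ]] HT HR.
  set (T := fun j => if excluded_middle_informative (Rel n j) then 1 else -1).
  destruct (sign_construct n f T HG HL) as [g1 [eps [Heps [[Hg1 Ig1] [HQ1 Hlip]]]]].
  set (s := Rmin (1/2) (eps/8)).
  assert (Hs0 : 0 < s) by (unfold s; apply Rmin_pos; lra).
  assert (Hs1 : s <= 1/2) by apply Rmin_l. assert (Hs2 : s <= eps/8) by apply Rmin_r.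
  destruct (steepV n f HG HL s Hs0) as [eV [HeV PV]].
  assert (EVe : exists eVe, 0 < eVe /\ (GENp n f -> forall g, inG g -> forall x y, in_I x -> in_I y ->
        Rabs (y - x) < eVe -> fe g y - fe g x >= s/16 -> ~ inVe n f g)).
  { destruct (classic (GENp n f)) as [Hp|Hp].
    - destruct Hp as [_ [HLe _]]. destruct (steepVe n f HG HLe s Hs0) as [e [He P]]. exists e. split; auto.
    - exists 1. split. lra. intros; contradiction. }
  destruct EVe as [eVe [HeVe PVe]].
  set (eta := Rmin (Rmin (1/5) (s/16)) (Rmin eV eVe) / 2).
  assert (Heta0 : 0 < eta) by (unfold eta; assert (0 < Rmin (Rmin (1/5) (s/16)) (Rmin eV eVe)) by (repeat apply Rmin_pos; lra); lra).
  assert (Hm1 : Rmin (Rmin (1/5) (s/16)) (Rmin eV eVe) <= 1/5) by (eapply Rle_trans; apply Rmin_l).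
  assert (Hm2 : Rmin (Rmin (1/5) (s/16)) (Rmin eV eVe) <= s/16) by (eapply Rle_trans; [apply Rmin_l| apply Rmin_r]).
  assert (Hm3 : Rmin (Rmin (1/5) (s/16)) (Rmin eV eVe) <= eV) by (eapply Rle_trans; [apply Rmin_r| apply Rmin_l]).
  assert (Hm4 : Rmin (Rmin (1/5) (s/16)) (Rmin eV eVe) <= eVe) by (eapply Rle_trans; [apply Rmin_r| apply Rmin_r]).
  assert (He1 : eta <= 1/5) by (unfold eta; lra). assert (He2 : eta <= s/16) by (unfold eta; lra).
  assert (He3 : eta < eV) by (unfold eta; lra). assert (He4 : eta < eVe) by (unfold eta; lra).
  destruct (w_steep eta ltac:(lra)) as [w [[Hw Iw] [W1 W2]]].
  set (g := fun t => (1 - s) * g1 t + s * w t).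
  assert (Hg : inG g) by (apply G_comb; auto; lra).
  assert (Ig : RInt g (-1) 1 = 0).
  { unfold g. apply (RInt_comb_G0 g1 w); split; auto. }
  assert (HQg : forall j, (j < n)%nat -> Q g (f j) = - (1 - s) * (eps * T j) + s * Q w (f j)).
  { intros j Hj. assert (Hfj : inG (f j)) by (apply HG; auto). unfold g. rewrite Q_lin; try apply contI_G; auto.
    rewrite (Q_opp (f j) g1), HQ1 by auto. ring. }
  assert (Hsign1 : forall j, (j < n)%nat -> Rel n j -> Q g (f j) < 0).
  { intros j Hj E. rewrite HQg by auto. assert (T j = 1) by (unfold T; destruct (excluded_middle_informative (Rel n j)) as [_|C]; [reflexivity| contradiction]).
    rewrite H. destruct (sign_arith s eps (Q w (f j)) Hs0 Hs1 Hs2 (Q_bound w (f j) Hw (proj1 (HG j Hj)))) as [S1 S2]; exact S1. }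
  assert (Hsign2 : forall j, (j < n)%nat -> ~ Rel n j -> Q g (f j) > 0).
  { intros j Hj E. rewrite HQg by auto. assert (T j = -1) by (unfold T; destruct (excluded_middle_informative (Rel n j)) as [C|_]; [contradiction| reflexivity]).
    rewrite H. destruct (sign_arith s eps (Q w (f j)) Hs0 Hs1 Hs2 (Q_bound w (f j) Hw (proj1 (HG j Hj)))) as [S1 S2]; exact S2. }
  assert (Hnz : forall j, (j < n)%nat -> Q g (f j) <> 0).
  { intros j Hj. destruct (classic (Rel n j)). specialize (Hsign1 j Hj H); lra. specialize (Hsign2 j Hj H); lra. }
  set (x := 1/2 - eta). set (y := 1/2).
  assert (Ix : in_I x) by (unfold x, in_I; lra). assert (Iy : in_I y) by (unfold y, in_I; lra).
  assert (Hxy : Rabs (y - x) = eta) by (unfold x, y; rewrite Rabs_right; lra).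
  assert (W1' : w y - w x = 1/2) by exact W1.
  assert (Hg1xy : g1 x <= g1 y) by (apply (G_le g1 Hg1); auto; unfold x, y; lra).
  exists g. split; [split; auto|]. split; [|split].
  - split; [|split].
    + apply G0_ext; auto. split; auto.
    + apply lin_of_notV; auto. apply (PV g Hg x y Ix Iy). lra.
      unfold g.
      assert (0 <= (1 - s) * (g1 y - g1 x)) by (apply Rmult_le_pos; lra).
      replace ((1 - s) * g1 y + s * w y - ((1 - s) * g1 x + s * w x)) with ((1 - s) * (g1 y - g1 x) + s * (w y - w x)) by ring.
      rewrite W1'. lra.
    + apply Qnz_ext; auto.
  - apply same_rel_build; auto.
    + intros j Hj E. apply Hsign2; auto. destruct HT as [_ [_ T3]]. intro E2. 
      destruct (T3 j n ltac:(lia) ltac:(lia) ltac:(lia)) as [_ C]. apply C; auto.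
    + intros j Hj E. rewrite Q_opp; auto. specialize (Hsign1 j Hj E). lra. apply HG; auto.
  - intros Hp. destruct Hp as [_ [HLe _]]. split; [|split].
    + apply G0_ext; auto. split; auto.
    + apply lin_of_notVe; auto. apply (PVe (conj HG (conj HLe HQ)) g Hg x y Ix Iy). lra.
      assert (L : g1 (-x) - g1 (-y) <= 2 * ((-x) - (-y))).
      { apply Hlip; unfold x, y; lra. }
      assert (Hg1m : g1 (-y) <= g1 (-x)) by (apply (G_le g1 Hg1); try apply in_I_opp; auto; unfold x, y; lra).
      replace (-x) with (-1/2 + eta) in L, Hg1m by (unfold x; field).
      replace (-y) with (-1/2) in L, Hg1m by (unfold y; field).
      unfold fe, g. replace (-x) with (-1/2 + eta) by (unfold x; field). replace (-y) with (-1/2) by (unfold y; field).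
      assert (0 <= (1 - s) * (g1 y - g1 x)) by (apply Rmult_le_pos; lra).
      assert ((1 - s) * (g1 (-1/2 + eta) - g1 (-1/2)) <= 1 * (2 * eta)).
      { apply Rmult_le_compat; lra. }
      assert (s * ((w y - w x) - (w (-1/2 + eta) - w (-1/2))) >= s * (1/4)).
      { apply Rle_ge, Rmult_le_compat_l; lra. }
      replace (((1 - s) * g1 y + s * w y + ((1 - s) * g1 (-1 / 2) + s * w (-1 / 2))) / 2 -
        ((1 - s) * g1 x + s * w x + ((1 - s) * g1 (-1 / 2 + eta) + s * w (-1 / 2 + eta))) / 2) with
        (((1 - s) * (g1 y - g1 x) - (1 - s) * (g1 (-1/2 + eta) - g1 (-1/2)) + s * ((w y - w x) - (w (-1/2 + eta) - w (-1/2))))/2) by field.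
      lra.
    + apply Qnz_ext; auto.
Qed.

Lemma interval_avoid M (bad : nat -> R -> Prop) : (forall k, (k<M)%nat -> forall s1 s2, bad k s1 -> bad k s2 -> s1 = s2) ->
  forall l r, l < r -> exists s, l < s < r /\ forall k, (k<M)%nat -> ~ bad k s.
Proof. intros H l r Hlr.
  assert (G : forall M', (M' <= M)%nat -> exists l' r', l <= l' /\ l' < r' /\ r' <= r /\
     forall s, l' < s < r' -> forall k, (k<M')%nat -> ~ bad k s).
  { induction M'; intros HM. exists l, r. split; [lra|split; [lra|split; [lra|]]]. intros; lia.
    destruct IHM' as [l' [r' [A [B [C D]]]]]. lia.
    destruct (classic (exists b, l' < b < r' /\ bad M' b)) as [[b [Hb Bb]]|NB].
    - exists l', b. split; [lra|split; [lra|split; [lra|]]]. intros s Hs k Hk. destruct (Nat.eq_dec k M').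
      + subst. intro Bs. assert (s = b) by (apply (H M'); auto; lia). lra.
      + apply D; [lra| lia].
    - exists l', r'. split; [lra|split; [lra|split; [lra|]]]. intros s Hs k Hk. destruct (Nat.eq_dec k M').
      + subst. intro Bs. apply NB. exists s; auto.
      + apply D; auto; lia. }
  destruct (G M (le_n M)) as [l' [r' [A [B [C D]]]]]. exists ((l'+r')/2). split. lra. apply D. lra.
Qed.

Lemma density_core n f (Pbad : (R->R) -> Prop) u w : all_G0 n f -> inG0 u -> inG0 w ->
  (forall j, (j<n)%nat -> Q w (f j) <> 0) -> ~ Pbad w ->
  (forall a b u1 u2, Pbad u1 -> Pbad u2 -> Pbad (fun t => a * u1 t + b * u2 t)) ->
  forall e, 0 < e -> exists g, inG0 g /\ sup_close u g e /\ (forall j, (j<n)%nat -> Q g (f j) <> 0) /\ ~ Pbad g.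
Proof.
  intros HG [Hu Iu] [Hw Iw] HQw Hb Hc e He.
  set (gs := fun s => fun t => (1 - s) * u t + s * w t).
  set (bad := fun k s => if Nat.ltb k n then Q (gs s) (f k) = 0 else Pbad (gs s)).
  assert (Hr : 0 < Rmin 1 (e/4)) by (apply Rmin_pos; lra).
  destruct (interval_avoid (S n) bad) with (l := 0) (r := Rmin 1 (e/4)) as [s [Hs Hg]]; auto.
  - intros k Hk s1 s2 B1 B2. unfold bad in B1, B2. destruct (Nat.ltb_spec k n).
    + assert (Hf : inG (f k)) by (apply HG; auto).
      unfold gs in B1, B2. rewrite Q_lin in B1, B2; try apply contI_G; auto.
      destruct (Req_dec s1 s2) as [E|E]; auto. exfalso. apply (HQw k); auto.
      set (a := Q u (f k)) in *. set (b := Q w (f k)) in *.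
      assert (E2 : (s1 - s2) * (b - a) = 0).
      { replace ((s1 - s2) * (b - a)) with (((1-s1)*a + s1*b) - ((1-s2)*a + s2*b)) by ring. rewrite B1, B2; ring. }
      apply Rmult_integral in E2. destruct E2 as [E2|E2]. lra.
      assert (b = a) by lra. rewrite <- H0 in B1. replace ((1 - s1) * b + s1 * b) with b in B1 by ring. auto.
    + destruct (Req_dec s1 s2) as [E|E]; auto. exfalso. apply Hb.
      assert (Ew : w = (fun t => ((1 - s2)/(s1 - s2)) * gs s1 t + (-(1 - s1)/(s1 - s2)) * gs s2 t)).
      { apply functional_extensionality. intros t. unfold gs. field. lra. }
      rewrite Ew. apply Hc; auto.
  - exists (gs s). assert (Hs1 : s <= 1) by (pose proof (Rmin_l 1 (e/4)); lra).
    assert (Hs2 : s <= e/4) by (pose proof (Rmin_r 1 (e/4)); lra).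
    split; [|split; [|split]].
    + split. apply G_comb; auto; lra. apply RInt_comb_G0; split; auto.
    + intros t Ht. unfold gs. replace ((1 - s) * u t + s * w t - u t) with (s * (w t - u t)) by ring.
      rewrite Rabs_mult, Rabs_right by lra.
      assert (Rabs (w t - u t) <= 2).
      { pose proof (G_I u Hu t Ht). pose proof (G_I w Hw t Ht). unfold in_I in *. apply Rabs_le; lra. }
      apply Rle_lt_trans with (s * 2). apply Rmult_le_compat_l; lra. lra.
    + intros j Hj. specialize (Hg j ltac:(lia)). unfold bad in Hg. destruct (Nat.ltb_spec j n); try lia. auto.
    + specialize (Hg n ltac:(lia)). unfold bad in Hg. destruct (Nat.ltb_spec n n); try lia. auto.
Qed.

Lemma sup_close_mono u g e e' : e <= e' -> sup_close u g e -> sup_close u g e'.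
Proof. intros H1 H2 t Ht. specialize (H2 t Ht). lra. Qed.

Lemma Qg_of_nz n f g : Q_nonzero (S n) (extend n f g) -> forall j, (j<n)%nat -> Q g (f j) <> 0.
Proof. intros H j Hj. specialize (H n j ltac:(lia) ltac:(lia) ltac:(lia)). rewrite ext_n, ext_ne in H by lia. auto. Qed.

Lemma open_gen n f (P : (R -> R) -> Prop) :
  all_G0 n f -> Q_nonzero n f ->
  (forall g, P g -> inG0 g /\ Q_nonzero (S n) (extend n f g)) ->
  (forall g, P g -> exists e, 0 < e /\ forall g', inG0 g' -> sup_close g g' e ->
       (forall j, (j<n)%nat -> 0 < Q g' (f j) * Q g (f j)) -> P g') ->
  open_in_G0 P.
Proof. intros HG HQ H1 H2. split. intros g Pg; apply H1; auto.
  intros g Pg. destruct (H1 g Pg) as [[Hg Ig] Hnz].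
  destruct (Qsign_stable n f HG g Hg (Qg_of_nz n f g Hnz)) as [e1 [He1 P1]].
  destruct (H2 g Pg) as [e2 [He2 P2]].
  exists (Rmin e1 e2). split. apply Rmin_pos; auto. intros g' Hg' Hc.
  apply P2; auto. apply sup_close_mono with (Rmin e1 e2); auto; apply Rmin_r.
  apply P1. apply Hg'. apply sup_close_mono with (Rmin e1 e2); auto; apply Rmin_l. Qed.

Lemma GEN_from n f g : GEN n f -> inG0 g -> lin_indep_with idI (S n) (extend n f g) ->
  (forall j, (j<n)%nat -> Q g (f j) <> 0) -> GEN (S n) (extend n f g).
Proof. intros [HG [HL HQ]] Hg Hl Hq. split; [|split]; auto. apply G0_ext; auto. apply Qnz_ext; auto. apply Hg. Qed.

Lemma GENp_from n f g : GENp n f -> inG0 g -> lin_indep (S n) (fun k => fe (extend n f g k)) ->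
  (forall j, (j<n)%nat -> Q g (f j) <> 0) -> GENp (S n) (extend n f g).
Proof. intros [HG [HL HQ]] Hg Hl Hq. split; [|split]; auto. apply G0_ext; auto. apply Qnz_ext; auto. apply Hg. Qed.

Lemma nz_of_prod a b : 0 < a * b -> a <> 0.
Proof. intros H E. rewrite E in H. lra. Qed.

Theorem theorem4p11 (n : nat) (f : nat -> R -> R) (Rel : nat -> nat -> Prop) :
  GEN n f ->
  tournament (S n) Rel ->
  restricts_to n Rel f ->
  (* (a) *)
  (open_in_G0 (fun g => inG0 g /\ GEN (S n) (extend n f g)) /\
   dense_in_G0 (fun g => inG0 g /\ GEN (S n) (extend n f g))) /\
  (GENp n f ->
   open_in_G0 (fun g => inG0 g /\ GENp (S n) (extend n f g)) /\
   dense_in_G0 (fun g => inG0 g /\ GENp (S n) (extend n f g))) /\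
  (* (b) *)
  (open_in_G0 (fun g => inG0 g /\ GEN (S n) (extend n f g) /\
                         same_rel (Rdig (S n) (extend n f g)) Rel) /\
   nonempty (fun g => inG0 g /\ GEN (S n) (extend n f g) /\
                         same_rel (Rdig (S n) (extend n f g)) Rel)) /\
  (* (c) *)
  (GENp n f ->
   open_in_G0 (fun g => inG0 g /\ GENp (S n) (extend n f g) /\
                         same_rel (Rdig (S n) (extend n f g)) Rel) /\
   nonempty (fun g => inG0 g /\ GENp (S n) (extend n f g) /\
                         same_rel (Rdig (S n) (extend n f g)) Rel)).
Proof.
  intros HGEN HT HR. pose proof HGEN as [HG [HL HQ]].
  destruct (construct n f Rel HGEN HT HR) as [w [Hw [HwG [HwR HwP]]]].
  assert (OA : open_in_G0 (fun g => inG0 g /\ GEN (S n) (extend n f g))).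
  { apply (open_gen n f); auto. intros g [Hg Hgen]. split; auto. apply Hgen.
    intros g [Hg [_ [Hl Hq]]]. destruct (indepV_stable n f HG g (proj1 Hg) Hl) as [e [He P]].
    exists e. split; auto. intros g' Hg' Hc Hs. split; auto. apply GEN_from; auto. apply P; auto. apply Hg'.
    intros j Hj. apply (nz_of_prod _ _ (Hs j Hj)). }
  assert (OAp : GENp n f -> open_in_G0 (fun g => inG0 g /\ GENp (S n) (extend n f g))).
  { intros Hp. destruct Hp as [_ [HLe HQe]]. apply (open_gen n f); auto. intros g [Hg Hgen]. split; auto. apply Hgen.
    intros g [Hg [_ [Hl Hq]]]. destruct (indepVe_stable n f HG g (proj1 Hg) Hl) as [e [He P]].
    exists e. split; auto. intros g' Hg' Hc Hs. split; auto. apply GENp_from; auto. split; auto. apply P; auto. apply Hg'.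
    intros j Hj. apply (nz_of_prod _ _ (Hs j Hj)). }
  split; [|split; [|split]].
  - split; auto. intros u Hu e He.
    destruct (density_core n f (inV n f) u w HG Hu Hw (Qg_of_nz n f w (proj2 (proj2 HwG))) (notV_of_lin n f w (proj1 (proj2 HwG)))
      (inV_comb n f) e He) as [g [Hg [Hc [Hq Hv]]]].
    exists g. split; auto. split; auto. apply GEN_from; auto. apply lin_of_notV; auto.
  - intros Hp. split; auto. intros u Hu e He.
    specialize (HwP Hp). pose proof Hp as [_ [HLe HQe]].
    destruct (density_core n f (inVe n f) u w HG Hu Hw (Qg_of_nz n f w (proj2 (proj2 HwP))) (notVe_of_lin n f w (proj1 (proj2 HwP)))
      (inVe_comb n f) e He) as [g [Hg [Hc [Hq Hv]]]].
    exists g. split; auto. split; auto. apply GENp_from; auto. apply lin_of_notVe; auto.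
  - split. 2: { exists w. auto. }
    apply (open_gen n f); auto. intros g [Hg [Hgen _]]. split; auto. apply Hgen.
    intros g [Hg [[_ [Hl Hq]] Hsr]]. destruct (indepV_stable n f HG g (proj1 Hg) Hl) as [e [He P]].
    exists e. split; auto. intros g' Hg' Hc Hs. split; auto. split. apply GEN_from; auto. apply P; auto. apply Hg'.
    intros j Hj. apply (nz_of_prod _ _ (Hs j Hj)).
    apply same_rel_trans with (Rdig (S n) (extend n f g)); auto. apply Rdig_transfer; auto. apply Hg. apply Hg'.
  - intros Hp. split. 2: { exists w. auto. }
    pose proof Hp as [_ [HLe HQe]].
    apply (open_gen n f); auto. intros g [Hg [Hgen _]]. split; auto. apply Hgen.
    intros g [Hg [[_ [Hl Hq]] Hsr]]. destruct (indepVe_stable n f HG g (proj1 Hg) Hl) as [e [He P]].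
    exists e. split; auto. intros g' Hg' Hc Hs. split; auto. split. apply GENp_from; auto. apply P; auto. apply Hg'.
    intros j Hj. apply (nz_of_prod _ _ (Hs j Hj)).
    apply same_rel_trans with (Rdig (S n) (extend n f g)); auto. apply Rdig_transfer; auto. apply Hg. apply Hg'.
Qed.
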